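(* Let $M(E,I)$ be a free partially commutative monoid, with $E$ totally ordered by $<$, and let $E_v\subseteq E$, $v\in V$, be the maximal subsets of mutually commuting generators. For each $v\in V$ let $T_v\subset M(E_v)$ be the set of products $a_1a_2\cdots a_n$ with $a_1<a_2<\dots<a_n$, $a_j\in E_v$, $n$ finite with $n\leqslant|E_v|$ (the product for $n=0$ being $1$), and let $\mathfrak FT_v$ be the full subcategory of $\mathfrak FM(E,I)$ with object set $T_v$. Then the inclusion $\bigcup_{v\in V}\mathfrak FT_v\subset\mathfrak FM(E,I)$ is strong coinitial.
   Context: $M(E,I)$: monoid generated by $E$ with relations $ab=ba$ for $(a,b)\in I$, $I\subseteq E\times E$ irreflexive symmetric; a subset of $E$ consists of mutually commuting generators if each pair of distinct elements lies in $I$; $M(E_v)$ is the submonoid generated by $E_v$. $\mathfrak FM$: objects the elements of $M$, morphisms $\alpha\to\beta$ the pairs $(f,g)$ with $g\alpha f=\beta$, composition $(f_2,g_2)\circ(f_1,g_1)=(f_1f_2,g_2g_1)$. A functor $S:\mathcal C\to\mathcal D$ of small categories is strong coinitial if every comma category $S/d$ (objects $(c,\alpha:S(c)\to d)$, morphisms $f$ with $\alpha_2\circ S(f)=\alpha_1$) is connected and has $\varinjlim{}_q^{S/d}\Delta\mathbb Z=0$ for $q>0$ (left derived functors of the colimit of the constant functor $\Delta\mathbb Z$). *)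

(* Defs.v *)
From Stdlib Require Import List Relations Sorted ZArith.
From Stdlib Require Import ClassicalEpsilon FunctionalExtensionality
  PropExtensionality ProofIrrelevance.
Import ListNotations.

Set Implicit Arguments.

Record cat := Cat {
  ob : Type;
  hom : ob -> ob -> Type;
  cid : forall a, hom a a;
  ccomp : forall x y z, hom y z -> hom x y -> hom x z;
  ccomp_id_l : forall a b (f : hom a b), ccomp (cid b) f = f;
  ccomp_id_r : forall a b (f : hom a b), ccomp f (cid a) = f;
  ccomp_assoc : forall a b c d (h : hom c d) (g : hom b c) (f : hom a b),
      ccomp h (ccomp g f) = ccomp (ccomp h g) f }.

Arguments cid {_} a.
Arguments ccomp {_ x y z} _ _.

Record functor (C D : cat) := Functor {
  fob : ob C -> ob D;
  fhom : forall a b, hom C a b -> hom D (fob a) (fob b);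
  fhom_id : forall a, fhom a a (cid a) = cid (fob a);
  fhom_comp : forall a b c (g : hom C b c) (f : hom C a b),
      fhom a c (ccomp g f) = ccomp (fhom b c g) (fhom a b f) }.

Arguments fob {C D} _ _.
Arguments fhom {C D} _ {a b} _.

Section Comma.
Variables (C D : cat) (S : functor C D) (d : ob D).

Definition comma_ob := {c : ob C & hom D (fob S c) d}.
Definition comma_hom (x y : comma_ob) :=
  {f : hom C (projT1 x) (projT1 y) | ccomp (projT2 y) (fhom S f) = projT2 x}.

Definition comma_id (x : comma_ob) : comma_hom x x.
Proof.
  refine (exist _ (cid (projT1 x)) _).
  rewrite fhom_id, (@ccomp_id_r D). reflexivity.
Defined.

Definition comma_comp (x y z : comma_ob) (g : comma_hom y z) (f : comma_hom x y)
  : comma_hom x z.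
Proof.
  refine (exist _ (ccomp (proj1_sig g) (proj1_sig f)) _).
  destruct g as [g pg]; destruct f as [f pf]; simpl.
  rewrite fhom_comp, (@ccomp_assoc D), pg, pf. reflexivity.
Defined.

Lemma comma_id_l x y (f : comma_hom x y) : comma_comp (comma_id y) f = f.
Proof. destruct f as [f pf]. apply subset_eq_compat. simpl. apply (@ccomp_id_l C). Qed.
Lemma comma_id_r x y (f : comma_hom x y) : comma_comp f (comma_id x) = f.
Proof. destruct f as [f pf]. apply subset_eq_compat. simpl. apply (@ccomp_id_r C). Qed.
Lemma comma_assoc x y z w (h : comma_hom z w) (g : comma_hom y z) (f : comma_hom x y) :
  comma_comp h (comma_comp g f) = comma_comp (comma_comp h g) f.
Proof. apply subset_eq_compat. simpl. apply (@ccomp_assoc C). Qed.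

Definition comma : cat :=
  @Cat comma_ob comma_hom comma_id comma_comp comma_id_l comma_id_r comma_assoc.
End Comma.

Section FullSub.
Variables (C : cat) (P : ob C -> Prop).
Definition fs_ob := {x : ob C | P x}.
Definition fs_hom (x y : fs_ob) := hom C (proj1_sig x) (proj1_sig y).
Definition full_sub : cat :=
  @Cat fs_ob fs_hom (fun x => cid (proj1_sig x))
       (fun x y z g f => ccomp g f)
       (fun x y f => @ccomp_id_l C _ _ f) (fun x y f => @ccomp_id_r C _ _ f)
       (fun x y z w h g f => @ccomp_assoc C _ _ _ _ h g f).
Definition incl : functor full_sub C :=
  @Functor full_sub C (fun x => proj1_sig x) (fun x y f => f)
           (fun x => eq_refl) (fun x y z g f => eq_refl).
End FullSub.

Definition connected (C : cat) : Prop :=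
  inhabited (ob C) /\
  forall x y, clos_refl_sym_trans (ob C) (fun a b => inhabited (hom C a b)) x y.

Section Nerve.
Variable C : cat.

Fixpoint seg (n : nat) (a : ob C) : Type :=
  match n with
  | 0 => unit
  | S m => {b : ob C & (hom C a b * seg m b)%type}
  end.

Definition simplex (n : nat) := {a : ob C & seg n a}.

(* remove vertex k+1 of a path (composing the adjacent arrows, or
   dropping the last arrow) *)
Fixpoint del (n : nat) : forall (a : ob C), seg (S n) a -> nat -> seg n a :=
  match n return forall (a : ob C), seg (S n) a -> nat -> seg n a with
  | 0 => fun a s k => tt
  | S m => fun a s k =>
      let (b, p) := s in
      match k with
      | 0 => let (c, q) := snd p in existT _ c (ccomp (fst q) (fst p), snd q)
      | S k' => existT _ b (fst p, @del m b (snd p) k')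
      end
  end.

Definition face (n : nat) (i : nat) (s : simplex (S n)) : simplex n :=
  match i with
  | 0 => let (a, t) := s in let (b, p) := t in existT _ b (snd p)
  | S j => let (a, t) := s in existT _ a (@del n a t j)
  end.

Definition chain (n : nat) := list (Z * simplex n).

Definition coef (n : nat) (c : chain n) (t : simplex n) : Z :=
  fold_right (fun p acc =>
      ((if excluded_middle_informative (snd p = t) then fst p else 0) + acc)%Z)
    0%Z c.

Definition sgn (i : nat) : Z := if Nat.even i then 1%Z else (-1)%Z.

Definition bd (n : nat) (c : chain (S n)) : chain n :=
  flat_map (fun p => map (fun i => (sgn i * fst p, @face n i (snd p)))%Z
                         (seq 0 (S (S n)))) c.

(* colim_q^C Delta Z = H_q(C_*(C, Delta Z)) vanishes for all q > 0:
   every (q = n+1)-cycle is a boundary (chains compared coefficientwise). *)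
Definition colim_pos_vanish : Prop :=
  forall (n : nat) (c : chain (S n)),
    (forall t, coef (bd c) t = 0%Z) ->
    exists b : chain (S (S n)), forall t, coef (bd b) t = coef c t.
End Nerve.

Definition strong_coinitial (C D : cat) (S : functor C D) : Prop :=
  forall d : ob D, connected (comma S d) /\ colim_pos_vanish (comma S d).

Lemma rst_map (A : Type) (R : relation A) (f : A -> A) :
  (forall u v, R u v -> R (f u) (f v)) ->
  forall u v, clos_refl_sym_trans A R u v -> clos_refl_sym_trans A R (f u) (f v).
Proof.
  intros H u v h; induction h.
  - apply rst_step; auto.
  - apply rst_refl.
  - apply rst_sym; auto.
  - eapply rst_trans; eauto.
Qed.

Section Trace.
Variables (E : Type) (I : E -> E -> Prop).

Definition trace_step (u v : list E) : Prop :=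
  exists x y a b, I a b /\ u = x ++ a :: b :: y /\ v = x ++ b :: a :: y.

Definition teq := clos_refl_sym_trans (list E) trace_step.
Definition tcls (w : list E) : list E -> Prop := fun u => teq w u.

Definition trace_monoid := {P : list E -> Prop | exists w, P = tcls w}.

Definition cls (w : list E) : trace_monoid := exist _ (tcls w) (ex_intro _ w eq_refl).
Definition rep (m : trace_monoid) : list E :=
  proj1_sig (constructive_indefinite_description _ (proj2_sig m)).

Lemma cls_rep m : cls (rep m) = m.
Proof.
  destruct m as [P HP]. unfold cls, rep. apply subset_eq_compat. simpl.
  destruct (constructive_indefinite_description _ HP) as [w Hw]. simpl.
  symmetry; exact Hw.
Qed.

Lemma tcls_eq u w : teq u w -> tcls u = tcls w.
Proof.
  intro h. apply functional_extensionality; intro x.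
  apply propositional_extensionality. unfold tcls; split; intro k.
  - eapply rst_trans; [apply rst_sym; exact h | exact k].
  - eapply rst_trans; [exact h | exact k].
Qed.

Lemma cls_eq u w : teq u w -> cls u = cls w.
Proof. intro h; apply subset_eq_compat; apply tcls_eq; exact h. Qed.

Lemma rep_cls w : teq w (rep (cls w)).
Proof.
  unfold rep. destruct (constructive_indefinite_description _ (proj2_sig (cls w)))
    as [u Hu]. simpl in *.
  assert (H : tcls w w) by apply rst_refl.
  rewrite Hu in H. apply rst_sym; exact H.
Qed.

Lemma teq_app_r u v w : teq u v -> teq (u ++ w) (v ++ w).
Proof.
  apply (@rst_map _ _ (fun z => z ++ w)).
  intros a b [x [y [p [q [H [-> ->]]]]]].
  exists x, (y ++ w), p, q. rewrite <- !app_assoc. simpl. auto.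
Qed.

Lemma teq_app_l u v w : teq u v -> teq (w ++ u) (w ++ v).
Proof.
  apply (@rst_map _ _ (fun z => w ++ z)).
  intros a b [x [y [p [q [H [-> ->]]]]]].
  exists (w ++ x), y, p, q. rewrite <- !app_assoc. auto.
Qed.

Definition mmul (m n : trace_monoid) : trace_monoid := cls (rep m ++ rep n).
Definition mone : trace_monoid := cls nil.

Lemma mmul_cls u w : mmul (cls u) (cls w) = cls (u ++ w).
Proof.
  apply cls_eq. eapply rst_trans.
  - apply teq_app_r. apply rst_sym. apply rep_cls.
  - apply teq_app_l. apply rst_sym. apply rep_cls.
Qed.

Lemma tm_ind (P : trace_monoid -> Prop) : (forall w, P (cls w)) -> forall m, P m.
Proof. intros H m. rewrite <- (cls_rep m). apply H. Qed.

Lemma mmul_assoc a b c : mmul a (mmul b c) = mmul (mmul a b) c.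
Proof.
  revert a b c. refine (tm_ind _ _); intro a.
  refine (tm_ind _ _); intro b. refine (tm_ind _ _); intro c.
  rewrite !mmul_cls, app_assoc. reflexivity.
Qed.
Lemma mmul_1l a : mmul mone a = a.
Proof. revert a; refine (tm_ind _ _); intro a. unfold mone. rewrite mmul_cls. reflexivity. Qed.
Lemma mmul_1r a : mmul a mone = a.
Proof. revert a; refine (tm_ind _ _); intro a. unfold mone. rewrite mmul_cls, app_nil_r. reflexivity. Qed.

Definition FM_hom (a b : trace_monoid) :=
  {p : trace_monoid * trace_monoid | mmul (mmul (snd p) a) (fst p) = b}.

Definition FM_id (a : trace_monoid) : FM_hom a a.
Proof.
  refine (exist _ (mone, mone) _). simpl. rewrite mmul_1l, mmul_1r. reflexivity.
Defined.

Definition FM_comp (a b c : trace_monoid) (g : FM_hom b c) (f : FM_hom a b) : FM_hom a c.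
Proof.
  refine (exist _ (mmul (fst (proj1_sig f)) (fst (proj1_sig g)),
                   mmul (snd (proj1_sig g)) (snd (proj1_sig f))) _).
  destruct g as [[f2 g2] Hg]; destruct f as [[f1 g1] Hf]; simpl in *.
  rewrite <- Hg, <- Hf. rewrite !mmul_assoc. reflexivity.
Defined.

Lemma FM_id_l a b (f : FM_hom a b) : FM_comp (FM_id b) f = f.
Proof.
  destruct f as [[f1 g1] Hf]. apply subset_eq_compat. simpl.
  rewrite mmul_1l, mmul_1r. reflexivity.
Qed.
Lemma FM_id_r a b (f : FM_hom a b) : FM_comp f (FM_id a) = f.
Proof.
  destruct f as [[f1 g1] Hf]. apply subset_eq_compat. simpl.
  rewrite mmul_1l, mmul_1r. reflexivity.
Qed.
Lemma FM_assoc a b c d (h : FM_hom c d) (g : FM_hom b c) (f : FM_hom a b) :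
  FM_comp h (FM_comp g f) = FM_comp (FM_comp h g) f.
Proof.
  apply subset_eq_compat. simpl. rewrite !mmul_assoc. reflexivity.
Qed.

Definition FM : cat := @Cat trace_monoid FM_hom FM_id FM_comp FM_id_l FM_id_r FM_assoc.

Definition commuting_set (A : E -> Prop) : Prop :=
  forall a b, A a -> A b -> a <> b -> I a b.
Definition maximal_commuting_set (A : E -> Prop) : Prop :=
  commuting_set A /\
  forall B, commuting_set B -> (forall x, A x -> B x) -> forall x, B x -> A x.

Variable lt : E -> E -> Prop.

Definition T_set (Ev : E -> Prop) (m : trace_monoid) : Prop :=
  exists l : list E, (forall x, In x l -> Ev x) /\ Sorted lt l /\ m = cls l.

Definition union_T (m : trace_monoid) : Prop :=
  exists Ev, maximal_commuting_set Ev /\ T_set Ev m.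
End Trace.

(* Main.v *)
From mathcomp Require classical_sets.
Require Import Defs.
From Stdlib Require Import List Relations Sorted ZArith Lia Arith.
From Stdlib Require Import ClassicalEpsilon FunctionalExtensionality
  PropExtensionality ProofIrrelevance Classical.
Import ListNotations.
Unset Implicit Arguments.

Fixpoint rem {A : Type} (i : nat) (l : list A) : list A :=
  match l, i with
  | [], _ => []
  | x :: l', 0 => l'
  | x :: l', S j => x :: rem j l'
  end.

Lemma rem_map {A B} (f : A -> B) i l : rem i (map f l) = map f (rem i l).
Proof. revert i; induction l; intros [|i]; simpl; auto. rewrite IHl; auto. Qed.

Lemma rem_len {A} i (l : list A) : i < length l -> length (rem i l) = pred (length l).
Proof. revert i; induction l; intros [|i]; simpl; intros; try lia. rewrite IHl; try lia.
Qed.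

Section Thin.
Variable C : cat.
Variable x0 : ob C.

Definition Rh (a b : ob C) := inhabited (hom C a b).
Definition thin := forall a b (f g : hom C a b), f = g.

Fixpoint vseg (n : nat) : forall a, seg C n a -> list (ob C) :=
  match n return forall a, seg C n a -> list (ob C) with
  | 0 => fun _ _ => []
  | S m => fun a s => projT1 s :: vseg m (projT1 s) (snd (projT2 s))
  end.
Definition verts n (s : simplex C n) : list (ob C) :=
  projT1 s :: vseg n (projT1 s) (projT2 s).

Fixpoint chainR (a : ob C) (l : list (ob C)) : Prop :=
  match l with [] => True | b :: l' => Rh a b /\ chainR b l' end.
Definition valid (l : list (ob C)) := match l with [] => False | a :: l' => chainR a l' end.

Definition pickh a b (H : Rh a b) : hom C a b :=
  proj1_sig (constructive_indefinite_description (fun _ : hom C a b => True)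
    (match H with inhabits f => ex_intro _ f I end)).

Fixpoint mkseg (n : nat) : forall a, list (ob C) -> seg C n a :=
  match n return forall a, list (ob C) -> seg C n a with
  | 0 => fun _ _ => tt
  | S m => fun a l =>
      match excluded_middle_informative (Rh a (hd a l)) with
      | left H => existT _ (hd a l) (pickh _ _ H, mkseg m (hd a l) (tl l))
      | right _ => existT _ a (cid a, mkseg m a (tl l))
      end
  end.
Definition mk n (l : list (ob C)) : simplex C n :=
  existT _ (hd x0 l) (mkseg n (hd x0 l) (tl l)).

Lemma vseg_len n a s : length (vseg n a s) = n.
Proof. revert a s; induction n; intros; simpl; auto. Qed.
Lemma verts_len n s : length (verts n s) = S n.
Proof. unfold verts; simpl; rewrite vseg_len; auto. Qed.

Lemma vseg_chain n a s : chainR a (vseg n a s).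
Proof. revert a s; induction n; intros a s; simpl; auto. destruct s as [b [f t]]; simpl.
  split; [constructor; exact f | apply IHn]. Qed.
Lemma verts_valid n s : valid (verts n s).
Proof. apply vseg_chain. Qed.

Hypothesis Hthin : thin.

Lemma vseg_inj n a s s' : vseg n a s = vseg n a s' -> s = s'.
Proof.
  revert a s s'; induction n; intros a s s' H.
  - destruct s, s'; auto.
  - destruct s as [b [f t]], s' as [b' [f' t']]. simpl in H. injection H as Hb Ht.
    subst b'. rewrite (Hthin _ _ f f'). rewrite (IHn _ _ _ Ht). auto.
Qed.
Lemma verts_inj n s s' : verts n s = verts n s' -> s = s'.
Proof.
  destruct s as [a t], s' as [a' t']; unfold verts; simpl; intro H.
  injection H as Ha Ht. subst a'. rewrite (vseg_inj _ _ _ _ Ht). auto.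
Qed.

Lemma mkseg_v n a l : chainR a l -> length l = n -> vseg n a (mkseg n a l) = l.
Proof.
  revert a l; induction n; intros a l H1 H2; destruct l as [|b l]; simpl in *; try discriminate; auto.
  destruct H1 as [Hab Hl].
  destruct (excluded_middle_informative (Rh a b)) as [h|h]; [|contradiction].
  simpl. f_equal. apply IHn; auto.
Qed.
Lemma mk_verts n l : valid l -> length l = S n -> verts n (mk n l) = l.
Proof.
  destruct l as [|a l]; simpl; intros; try contradiction. unfold verts, mk; simpl.
  rewrite mkseg_v; auto.
Qed.
Lemma mk_of_verts n s : mk n (verts n s) = s.
Proof. apply verts_inj. apply mk_verts. apply verts_valid. apply verts_len. Qed.

Lemma del_v n a (s : seg C (S n) a) k : k <= n -> vseg n a (del s k) = rem k (vseg (S n) a s).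
Proof.
  revert a s k; induction n; intros a s k Hk.
  - destruct s as [b [f t]]. simpl. assert (k = 0) by lia. subst; auto.
  - destruct s as [b [f [c [g t]]]]. destruct k as [|k].
    + simpl. auto.
    + simpl. f_equal. rewrite IHn by lia. auto.
Qed.

Lemma face_v n i (s : simplex C (S n)) : i <= S n -> verts n (face i s) = rem i (verts (S n) s).
Proof.
  intro Hi. destruct i as [|j]; destruct s as [a [b [f t]]]; unfold verts; simpl; auto.
  f_equal. rewrite del_v by lia. auto.
Qed.
End Thin.

Definition lchain (V : Type) := list (Z * list V).
Definition ind {V} (x w : list V) : Z := if excluded_middle_informative (x = w) then 1%Z else 0%Z.
Definition coefL {V} (L : lchain V) (w : list V) : Z :=
  fold_right (fun p acc => (fst p * ind (snd p) w + acc)%Z) 0%Z L.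
Definition lceq {V} (L1 L2 : lchain V) := forall w, coefL L1 w = coefL L2 w.
Definition scale {V} (k : Z) (L : lchain V) : lchain V := map (fun q => (k * fst q, snd q)%Z) L.
Definition ext {V W} (f : list V -> lchain W) (L : lchain V) : lchain W :=
  flat_map (fun p => scale (fst p) (f (snd p))) L.
Definition sumL {A} (g : A -> Z) (L : list A) : Z := fold_right (fun p acc => (g p + acc)%Z) 0%Z L.
Definition bdv {V} (v : list V) : lchain V := map (fun i => (sgn i, rem i v)) (seq 0 (length v)).

Fixpoint sumN (n : nat) (f : nat -> Z) : Z := match n with 0 => 0%Z | S k => (sumN k f + f k)%Z end.
Lemma sumN_ext n f g : (forall i, i < n -> f i = g i) -> sumN n f = sumN n g.
Proof. induction n; simpl; intros; auto. rewrite IHn, H; auto. Qed.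
Lemma sumN_add n f g : sumN n (fun i => f i + g i)%Z = (sumN n f + sumN n g)%Z.
Proof. induction n; simpl; auto. rewrite IHn; lia. Qed.
Lemma sumN_mulr n c f : sumN n (fun i => c * f i)%Z = (c * sumN n f)%Z.
Proof. induction n; simpl; auto. lia. rewrite IHn; ring. Qed.
Lemma sumN_opp n f : sumN n (fun i => - f i)%Z = (- sumN n f)%Z.
Proof. induction n; simpl; auto. rewrite IHn; lia. Qed.
Lemma sumN_split a b f : sumN (a + b) f = (sumN a f + sumN b (fun k => f (a + k)%nat))%Z.
Proof. induction b; simpl. rewrite Nat.add_0_r; lia. rewrite Nat.add_succ_r. simpl. rewrite IHb. lia. Qed.
Lemma sumN_zero n f : (forall i, i < n -> f i = 0%Z) -> sumN n f = 0%Z.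
Proof. induction n; simpl; intros; auto. rewrite IHn, H; auto. Qed.
Lemma sumN_swap n m f : sumN n (fun i => sumN m (fun j => f i j)) = sumN m (fun j => sumN n (fun i => f i j)).
Proof. induction n; simpl.
  - symmetry; apply sumN_zero; auto.
  - rewrite IHn, <- sumN_add. auto. Qed.
Lemma sumN_tele n g : sumN n (fun i => g i - g (S i))%Z = (g 0%nat - g n)%Z.
Proof. induction n; simpl; auto. lia. rewrite IHn; lia. Qed.




Section LC0.
Context {V : Type}.
Implicit Types (L : lchain V) (w x : list V).

Lemma coefL_nil w : coefL [] w = 0%Z. Proof. reflexivity. Qed.

Lemma coefL_single k x w : coefL [(k, x)] w = (k * ind x w)%Z.
Proof. simpl. lia. Qed.
Lemma coefL_app L1 L2 w : coefL (L1 ++ L2) w = (coefL L1 w + coefL L2 w)%Z.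
Proof. induction L1; simpl; auto. rewrite IHL1; lia. Qed.
Lemma coefL_scale k (L : lchain V) w : coefL (scale k L) w = (k * coefL L w)%Z.
Proof. induction L; simpl; auto. lia. rewrite IHL; ring. Qed.
Lemma sumL_app {A} g (L1 L2 : list A) : sumL g (L1 ++ L2) = (sumL g L1 + sumL g L2)%Z.
Proof. induction L1; simpl; auto. rewrite IHL1; lia. Qed.


Lemma lceq_refl L : lceq L L. Proof. intro; auto. Qed.
Lemma lceq_sym L1 L2 : lceq L1 L2 -> lceq L2 L1. Proof. intros H w; auto. Qed.
Lemma lceq_trans L1 L2 L3 : lceq L1 L2 -> lceq L2 L3 -> lceq L1 L3.
Proof. intros H1 H2 w; rewrite H1; auto. Qed.
Lemma lceq_app L1 L2 L3 L4 : lceq L1 L2 -> lceq L3 L4 -> lceq (L1 ++ L3) (L2 ++ L4).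
Proof. intros H1 H2 w; rewrite !coefL_app, H1, H2; auto. Qed.

Lemma sumL_zero (L : lchain V) : lceq L [] ->
  forall phi : list V -> Z, sumL (fun p => fst p * phi (snd p))%Z L = 0%Z.
Proof.
  remember (length L) as n. revert L Heqn. induction n as [n IH] using lt_wf_ind.
  intros L Hn HL phi. destruct L as [|[k v] L']. simpl; auto.
  set (L1 := filter (fun p => if excluded_middle_informative (snd p = v) then true else false) ((k,v)::L')).
  set (L2 := filter (fun p => if excluded_middle_informative (snd p = v) then false else true) ((k,v)::L')).
  assert (Hs : forall (g : Z * list V -> Z) (M : lchain V), sumL g M =
     (sumL g (filter (fun p => if excluded_middle_informative (snd p = v) then true else false) M)
     + sumL g (filter (fun p => if excluded_middle_informative (snd p = v) then false else true) M))%Z).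
  { intros g M; induction M; simpl; auto. destruct (excluded_middle_informative (snd a = v)); simpl; lia. }
  assert (Hc : forall M w, coefL M w =
     (coefL (filter (fun p => if excluded_middle_informative (snd p = v) then true else false) M) w
     + coefL (filter (fun p => if excluded_middle_informative (snd p = v) then false else true) M) w)%Z).
  { intros M w; induction M; simpl; auto. destruct (excluded_middle_informative (snd a = v)); simpl; lia. }
  rewrite Hs. fold L1 L2.
  assert (HL1 : forall g : list V -> Z, sumL (fun p => fst p * g (snd p))%Z L1 = (coefL L1 v * g v)%Z).
  { intro g. unfold L1. generalize ((k,v)::L'). intro M; induction M as [|[k' v'] M IHM]; simpl; auto.
    destruct (excluded_middle_informative (v' = v)); simpl; auto.
    rewrite IHM. subst. unfold ind. destruct (excluded_middle_informative (v = v)); try congruence. lia. }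
  assert (HL2v : forall g : list V -> Z, coefL L2 v = 0%Z).
  { intro g. unfold L2. generalize ((k,v)::L'). intro M; induction M as [|[k' v'] M IHM]; simpl; auto.
    destruct (excluded_middle_informative (v' = v)); simpl; auto.
    rewrite IHM. unfold ind. destruct (excluded_middle_informative (v' = v)); try congruence. lia. }
  assert (HL1v : coefL L1 v = 0%Z).
  { pose proof (HL v) as E. rewrite (Hc ((k,v)::L')) in E. fold L1 L2 in E.
    rewrite (HL2v (fun _ => 0%Z)) in E. simpl in E. lia. }
  rewrite HL1, HL1v. simpl.
  assert (Hlen : length L2 < length ((k,v)::L')).
  { unfold L2. simpl. destruct (excluded_middle_informative (v = v)); try congruence. simpl.
    pose proof (filter_length_le (fun p : Z * list V => if excluded_middle_informative (snd p = v) then false else true) L'). lia. }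
  rewrite (IH (length L2)); auto. lia.
  intro w. simpl. destruct (excluded_middle_informative (w = v)) as [->|Hw].
  - apply (HL2v (fun _ => 0%Z)).
  - pose proof (HL w) as E. rewrite (Hc _ w) in E. fold L1 L2 in E.
    assert (coefL L1 w = 0%Z).
    { unfold L1. generalize ((k,v)::L'). intro M; induction M as [|[k' v'] M IHM]; simpl; auto.
      destruct (excluded_middle_informative (v' = v)); simpl; auto.
      rewrite IHM. unfold ind. destruct (excluded_middle_informative (v' = w)); try congruence. lia. }
    simpl in E. lia.
Qed.














Lemma coefL_mapseq n (a : nat -> Z) (x : nat -> list V) w :
  coefL (map (fun i => (a i, x i)) (seq 0 n)) w = sumN n (fun i => a i * ind (x i) w)%Z.
Proof. induction n. reflexivity. rewrite seq_S, map_app, coefL_app, IHn.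
  cbn [map sumN Nat.add]. rewrite coefL_single. reflexivity. Qed.


Lemma sgn_S i : sgn (S i) = (- sgn i)%Z.
Proof. unfold sgn. rewrite Nat.even_succ, <- Nat.negb_even. destruct (Nat.even i); auto. Qed.
Lemma sgn_sq i : (sgn i * sgn i = 1)%Z.
Proof. unfold sgn. destruct (Nat.even i); auto. Qed.


End LC0.

Section LC1.
Context {V W : Type}.
Implicit Types (L : lchain V).
Lemma ext_nil (f : list V -> lchain W) : ext f [] = []. Proof. reflexivity. Qed.
Lemma coefL_ext (f : list V -> lchain W) L w : coefL (ext f L) w = sumL (fun p => fst p * coefL (f (snd p)) w)%Z L.
Proof. induction L; simpl; auto. rewrite coefL_app, coefL_scale, IHL. auto. Qed.
Lemma ext_resp0 (f : list V -> lchain W) L : lceq L [] -> lceq (ext f L) [].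
Proof. intros H w. rewrite coefL_ext. simpl. apply (sumL_zero L H (fun u => coefL (f u) w)). Qed.
Lemma ext_app (f : list V -> lchain W) L1 L2 : ext f (L1 ++ L2) = ext f L1 ++ ext f L2.
Proof. unfold ext. apply flat_map_app. Qed.
Lemma ext_scale (f : list V -> lchain W) k L w : coefL (ext f (scale k L)) w = (k * coefL (ext f L) w)%Z.
Proof. rewrite !coefL_ext. induction L; simpl; auto. lia. rewrite IHL. ring. Qed.
Lemma ext_resp (f : list V -> lchain W) L1 L2 : lceq L1 L2 -> lceq (ext f L1) (ext f L2).
Proof.
  intros H w. assert (H0 : lceq (L1 ++ scale (-1) L2) []).
  { intro u. rewrite coefL_app, coefL_scale, H, coefL_nil. lia. }
  pose proof (ext_resp0 f _ H0 w). rewrite ext_app, coefL_app, ext_scale, coefL_nil in H1. lia.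
Qed.
Lemma ext_congr (f g : list V -> lchain W) L : (forall v, lceq (f v) (g v)) -> lceq (ext f L) (ext g L).
Proof. intros H w. rewrite !coefL_ext. induction L; simpl; auto. rewrite IHL, H. auto. Qed.
Lemma coefL_ext_mapseq (f : list V -> lchain W) n (a : nat -> Z) (x : nat -> list V) w :
  coefL (ext f (map (fun i => (a i, x i)) (seq 0 n))) w = sumN n (fun i => a i * coefL (f (x i)) w)%Z.
Proof. induction n. reflexivity. rewrite seq_S, map_app, ext_app, coefL_app, IHn.
  cbn [map sumN Nat.add ext flat_map fst snd]. rewrite app_nil_r, coefL_scale. reflexivity. Qed.
End LC1.

Section LC2.
Context {V W U : Type}.
Implicit Types (L : lchain V).
Lemma ext_comp (f : list W -> lchain U) (g : list V -> lchain W) L : lceq (ext f (ext g L)) (ext (fun v => ext f (g v)) L).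
Proof.
  intros w. induction L as [|[k v] L IH]; simpl; auto.
  unfold ext at 1. simpl. fold (ext f (ext g L)). rewrite flat_map_app. fold (ext f (scale k (g v))).
  fold (ext f (ext g L)). rewrite coefL_app, IH. rewrite coefL_app, coefL_scale.
  rewrite ext_scale. auto.
Qed.
End LC2.


Section Prism.
Variables (V : Type) (F G : V -> V).

Fixpoint Pv (i : nat) (v : list V) {struct v} : list V :=
  match v, i with
  | [], _ => []
  | a :: v', 0 => F a :: map G (a :: v')
  | a :: v', S i' => F a :: Pv i' v'
  end.
Fixpoint Av (i : nat) (v : list V) : list V :=
  match i, v with
  | 0, _ => map G v
  | S i', [] => []
  | S i', a :: v' => F a :: Av i' v'
  end.

Lemma Pv_len i v : i < length v -> length (Pv i v) = S (length v).
Proof. revert i; induction v as [|a v IH]; intros [|i] H; simpl in *; try lia.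
  all: try (rewrite length_map; auto); try (rewrite IH; lia). Qed.
Lemma PL1 i j v : j < i -> rem j (Pv i v) = Pv (pred i) (rem j v).
Proof. revert i j; induction v; intros [|i] [|j] H; simpl; try lia; auto.
  rewrite IHv by lia. destruct i; try lia. simpl. auto. Qed.
Lemma PL2 i v : rem i (Pv i v) = Av i v.
Proof. revert i; induction v; intros [|i]; cbn; auto. rewrite IHv; auto. Qed.
Lemma PL3 i v : rem (S i) (Pv i v) = Av (S i) v.
Proof. revert i; induction v; intros [|i]. 1-3: simpl; auto. specialize (IHv i). cbn [Pv]. change (rem (S (S i)) (F a :: Pv i v)) with (F a :: rem (S i) (Pv i v)). rewrite IHv. reflexivity. Qed.
Lemma PL4 i k v : rem (S (S (i + k))) (Pv i v) = Pv i (rem (S (i + k)) v).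
Proof. revert i; induction v as [|a v IH]; intros [|i].
  1-2: simpl; auto.
  - simpl Nat.add. change (rem (S (S k)) (Pv 0 (a :: v))) with (F a :: G a :: rem k (map G v)).
    change (rem (S k) (a :: v)) with (a :: rem k v). cbn [Pv map]. rewrite rem_map. reflexivity.
  - change (S i + k) with (S (i + k)). cbn [Pv].
    change (rem (S (S (S (i + k)))) (F a :: Pv i v)) with (F a :: rem (S (S (i + k))) (Pv i v)).
    rewrite IH. change (rem (S (S (i + k))) (a :: v)) with (a :: rem (S (i + k)) v). cbn [Pv]. reflexivity.
Qed.
Lemma Av0 v : Av 0 v = map G v. Proof. destruct v; auto. Qed.
Lemma AvN v : Av (length v) v = map F v.
Proof. induction v; simpl; auto. rewrite IHv; auto. Qed.

Definition hv (v : list V) : lchain V := map (fun i => (sgn i, Pv i v)) (seq 0 (length v)).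

Lemma prism_id v w :
  (coefL (ext bdv (hv v)) w + coefL (ext hv (bdv v)) w
   = ind (map G v) w - ind (map F v) w)%Z.
Proof.
  destruct v as [|a v0].
  { simpl. unfold hv, bdv. simpl. lia. }
  remember (a :: v0) as v. assert (HN : length v = S (length v0)) by (subst; auto).
  set (m := length v0). fold m in HN. clear Heqv.
  set (Y := fun i k => ind (Pv i (rem k v)) w).
  set (A := fun i => ind (Av i v) w).
  unfold hv at 1. rewrite coefL_ext_mapseq. unfold bdv at 2. rewrite coefL_ext_mapseq.
  rewrite HN.
  assert (T1 : sumN (S m) (fun i => sgn i * coefL (bdv (Pv i v)) w)%Z =
    (sumN (S m) (fun i => sgn i * sumN i (fun j => sgn j * Y (pred i) j))%Z
     + sumN (S m) (fun i => A i - A (S i))%Z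
     + sumN (S m) (fun i => sgn i * sumN (m - i) (fun k => sgn (S (S (i + k))) * Y i (S (i + k))))%Z)%Z).
  { rewrite <- !sumN_add. apply sumN_ext. intros i Hi.
    unfold bdv. rewrite coefL_mapseq. rewrite Pv_len by lia. rewrite HN.
    replace (S (S m)) with (i + (2 + (m - i))) by lia.
    rewrite sumN_split, sumN_split. cbn [sumN].
    rewrite Nat.add_0_r, PL2. replace (i + 1) with (S i) by lia. rewrite PL3.
    rewrite (sumN_ext i _ (fun j => sgn j * Y (pred i) j)%Z).
    2:{ intros j Hj. rewrite PL1 by lia. reflexivity. }
    rewrite (sumN_ext (m - i) _ (fun k => sgn (S (S (i + k))) * Y i (S (i + k)))%Z).
    2:{ intros k Hk. replace (i + (2 + k)) with (S (S (i + k))) by lia. rewrite PL4. reflexivity. }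
    rewrite sgn_S. unfold A.
    assert (Hg : forall s x y z u, (s*s = 1 -> s*(x + (0 + s*y + -s*z + u)) = s*x + (y - z) + s*u)%Z).
    { intros s x y z u H. replace (s*(x + (0 + s*y + -s*z + u)))%Z with (s*x + (s*s)*y - (s*s)*z + s*u)%Z by ring.
      rewrite H. ring. }
    apply Hg. apply sgn_sq. }
  assert (T2 : sumN (S m) (fun k => sgn k * coefL (hv (rem k v)) w)%Z =
     (sumN m (fun i => sgn i * sumN (S i) (fun k => sgn k * Y i k))
     + sumN m (fun i => sgn i * sumN (m - i) (fun k => sgn (S (i + k)) * Y i (S (i + k)))))%Z).
  { rewrite (sumN_ext (S m) _ (fun k => sumN m (fun i => sgn k * (sgn i * Y i k)))%Z).
    2:{ intros k Hk. unfold hv. rewrite coefL_mapseq. rewrite rem_len by lia. rewrite HN.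
        simpl pred. rewrite <- sumN_mulr. reflexivity. }
    rewrite sumN_swap. rewrite <- sumN_add. apply sumN_ext. intros i Hi.
    replace (S m) with (S i + (m - i)) at 1 by lia. rewrite sumN_split.
    rewrite <- !sumN_mulr. f_equal.
    - apply sumN_ext; intros; ring.
    - apply sumN_ext; intros; simpl; ring. }
  rewrite T1, T2. clear T1 T2.
  rewrite sumN_tele. unfold A. rewrite Av0. replace (Av (S m) v) with (map F v) by (rewrite <- HN; symmetry; apply AvN).
  replace (S m) with (1 + m) at 1 by lia. rewrite sumN_split. cbn [sumN].
  rewrite Nat.sub_diag. cbn [sumN].
  assert (E1 : sumN m (fun k => sgn (1 + k) * sumN (1 + k) (fun j => sgn j * Y (pred (1 + k)) j))%Z
     = (- sumN m (fun i => sgn i * (sumN i (fun k => sgn k * Y i k) + sgn i * Y i i)))%Z).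
  { rewrite <- sumN_opp. apply sumN_ext; intros. cbn [Nat.add sumN pred]. rewrite sgn_S. ring. }
  assert (E2 : sumN m (fun i => sgn i * sumN (m - i) (fun k => sgn (S (S (i + k))) * Y i (S (i + k))))%Z
     = (- sumN m (fun i => sgn i * sumN (m - i) (fun k => sgn (S (i + k)) * Y i (S (i + k)))))%Z).
  { rewrite <- sumN_opp. apply sumN_ext; intros. rewrite <- sumN_mulr, <- sumN_mulr.
    rewrite <- sumN_opp. apply sumN_ext; intros. rewrite (sgn_S (S (i + i0))). ring. }
  rewrite E1, E2. ring.
Qed.

End Prism.

Definition vchain (C : cat) n (c : chain C n) : lchain (ob C) :=
  map (fun p => (fst p, verts C n (snd p))) c.
Definition mono (C D : cat) (F : ob C -> ob D) := forall a b, Rh C a b -> Rh D (F a) (F b).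
Definition sgl {V W} (F : V -> W) (v : list V) : lchain W := [(1%Z, map F v)].

Lemma chainR_map (C D : cat) (F : ob C -> ob D) : mono C D F ->
  forall l a, chainR C a l -> chainR D (F a) (map F l).
Proof. intros HF; induction l; simpl; intros; auto. destruct H; split; auto. Qed.
Lemma valid_map (C D : cat) (F : ob C -> ob D) : mono C D F ->
  forall l, valid C l -> valid D (map F l).
Proof. intros HF [|a l]; simpl; auto. apply chainR_map; auto. Qed.

Lemma sumL_add {A} (f g : A -> Z) L : (sumL f L + sumL g L)%Z = sumL (fun p => f p + g p)%Z L.
Proof. induction L; simpl; auto. rewrite <- IHL. lia. Qed.
Lemma sumL_ext {A} (f g : A -> Z) L : (forall p, f p = g p) -> sumL f L = sumL g L.
Proof. intro H; induction L; simpl; auto. rewrite IHL, H; auto. Qed.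
Lemma sumL_mul {A} (f : A -> Z) c L : sumL (fun p => c * f p)%Z L = (c * sumL f L)%Z.
Proof. induction L; simpl; auto. lia. rewrite IHL. ring. Qed.

Section Real.
Variable C : cat.
Hypothesis Hthin : thin C.

Lemma coef_vchain n (c : chain C n) t : coef c t = coefL (vchain C n c) (verts C n t).
Proof.
  induction c as [|[k s] c IH]; simpl; auto. rewrite IH. unfold ind.
  destruct (excluded_middle_informative (s = t)); destruct (excluded_middle_informative (verts C n s = verts C n t)); subst; try lia.
  congruence. apply verts_inj in e; auto. contradiction.
Qed.

Lemma coefL_vchain_out n (c : chain C n) w : (forall t, verts C n t <> w) -> coefL (vchain C n c) w = 0%Z.
Proof. intro H. induction c as [|[k s] c IH]; simpl; auto. rewrite IH. unfold ind.
  destruct (excluded_middle_informative (verts C n s = w)). exfalso; eapply H; eauto. lia. Qed.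

Lemma ceq_of_lceq n (c1 c2 : chain C n) : lceq (vchain C n c1) (vchain C n c2) -> forall t, coef c1 t = coef c2 t.
Proof. intros H t. rewrite !coef_vchain. apply H. Qed.
Lemma lceq_of_ceq n (c1 c2 : chain C n) : (forall t, coef c1 t = coef c2 t) -> lceq (vchain C n c1) (vchain C n c2).
Proof. intros H w. destruct (classic (exists t, verts C n t = w)) as [[t <-]|Hn].
  rewrite <- !coef_vchain; auto. rewrite !coefL_vchain_out; auto; intros t Ht; apply Hn; eauto. Qed.

Lemma vchain_bd n (c : chain C (S n)) : vchain C n (bd c) = ext bdv (vchain C (S n) c).
Proof.
  induction c as [|[k s] c IH]; [reflexivity|]. unfold bd, ext in *. cbn [flat_map fst snd].
  unfold vchain in *. rewrite map_app. rewrite IH. cbn [map fst snd]. cbn [flat_map fst snd]. f_equal.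
  unfold bdv, scale. rewrite verts_len, !map_map. apply map_ext_in. intros i Hi. apply in_seq in Hi.
  cbn [fst snd]. rewrite face_v by (auto; lia). f_equal. lia.
Qed.

Lemma vchain_app n (c1 c2 : chain C n) : vchain C n (c1 ++ c2) = vchain C n c1 ++ vchain C n c2.
Proof. apply map_app. Qed.
End Real.

Section Homotopy.
Variable C : cat.
Hypothesis Hthin : thin C.
Variable x0 : ob C.
Variables F G : ob C -> ob C.
Hypothesis HF : mono C C F.
Hypothesis HG : mono C C G.
Hypothesis HFG : forall x, Rh C (F x) (G x).

Lemma Pv_valid i a v : chainR C a v -> chainR C (F a) (tl (Pv _ F G i (a :: v))).
Proof.
  revert i a; induction v as [|b v IH]; intros [|i] a H; simpl in *; auto.
  - destruct H as [H1 H2]. split; [auto|]. split; [auto|]. apply chainR_map; auto.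
  - destruct H as [H1 H2]. specialize (IH i b H2). destruct i; simpl in *; split; auto.
Qed.
Lemma Pv_valid' i v : valid C v -> valid C (Pv _ F G i v).
Proof. destruct v as [|a v]; simpl; auto. intro H. pose proof (Pv_valid i a v H).
  destruct i; simpl in *; auto. Qed.

Definition realh n (z : chain C n) : chain C (S n) :=
  flat_map (fun p => map (fun i => (fst p * sgn i, mk C x0 (S n) (Pv _ F G i (verts C n (snd p)))))%Z (seq 0 (S n))) z.

Lemma vchain_realh n (z : chain C n) : vchain C (S n) (realh n z) = ext (hv _ F G) (vchain C n z).
Proof.
  induction z as [|[k s] z IH]; [reflexivity|]. unfold realh, ext in *. cbn [flat_map fst snd].
  unfold vchain in *. rewrite map_app, IH. cbn [map fst snd flat_map]. f_equal.
  unfold hv, scale. rewrite verts_len, !map_map. apply map_ext_in. intros i Hi. apply in_seq in Hi.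
  cbn [fst snd]. rewrite mk_verts; auto. apply Pv_valid'. apply verts_valid. rewrite Pv_len; rewrite verts_len; auto. lia.
Qed.

Lemma homotopy n (z : chain C (S n)) : lceq (vchain C n (bd z)) [] ->
  exists b : chain C (S (S n)),
    lceq (vchain C (S n) (bd b)) (ext (sgl G) (vchain C (S n) z) ++ scale (-1) (ext (sgl F) (vchain C (S n) z))).
Proof.
  intros Hz. exists (realh (S n) z). rewrite vchain_bd by auto. rewrite vchain_realh.
  set (L := vchain C (S n) z). rewrite vchain_bd in Hz by auto. fold L in Hz.
  assert (H0 : lceq (ext (hv _ F G) (ext bdv L)) []) by (apply ext_resp0; auto).
  intro w. pose proof (H0 w) as E. rewrite coefL_nil in E.
  rewrite coefL_app, coefL_scale.
  pose proof (ext_comp bdv (hv _ F G) L w) as E1. pose proof (ext_comp (hv _ F G) bdv L w) as E2.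
  rewrite E1. rewrite E2 in E. rewrite !coefL_ext in *.
  clear E1 E2 H0 Hz.
  rewrite (sumL_ext _ (fun p => fst p * (ind (map G (snd p)) w - ind (map F (snd p)) w) + (-1) * (fst p * coefL (ext (hv _ F G) (bdv (snd p))) w))%Z).
  2:{ intros [k v]. cbn [fst snd]. pose proof (prism_id _ F G v w). nia. }
  rewrite <- sumL_add, sumL_mul, E. unfold sgl.
  rewrite (sumL_ext _ (fun p => fst p * (ind (map G (snd p)) w) + (-1) * (fst p * ind (map F (snd p)) w))%Z).
  2:{ intros [k v]. cbn [fst snd]. ring. }
  rewrite <- sumL_add, sumL_mul.
  rewrite (sumL_ext (fun p => (fst p * coefL [(1%Z, map G (snd p))] w)%Z) (fun p => fst p * (ind (map G (snd p)) w))%Z).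
  2:{ intros [k v]. cbn [fst snd]. rewrite coefL_single. ring. }
  rewrite (sumL_ext (fun p => (fst p * coefL [(1%Z, map F (snd p))] w)%Z) (fun p => fst p * (ind (map F (snd p)) w))%Z).
  2:{ intros [k v]. cbn [fst snd]. rewrite coefL_single. ring. }
  ring.
Qed.
End Homotopy.

Lemma coefL_cons {V} (p : Z * list V) L w : coefL (p :: L) w = (fst p * ind (snd p) w + coefL L w)%Z.
Proof. reflexivity. Qed.

Lemma bd_comm {V W} (F : V -> W) L : lceq (ext bdv (ext (sgl F) L)) (ext (sgl F) (ext bdv L)).
Proof.
  eapply lceq_trans. apply ext_comp. eapply lceq_trans. 2: apply lceq_sym, ext_comp.
  apply ext_congr. intros v w. unfold sgl at 1, ext at 1. cbn [flat_map fst snd].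
  rewrite app_nil_r, coefL_scale. unfold bdv at 2. rewrite coefL_ext_mapseq. unfold bdv.
  rewrite coefL_mapseq, length_map. rewrite <- sumN_mulr. apply sumN_ext. intros i Hi.
  unfold sgl. rewrite coefL_single, rem_map. ring.
Qed.

Lemma sgl_comp {V W U} (F : V -> W) (G : W -> U) L :
  lceq (ext (sgl G) (ext (sgl F) L)) (ext (sgl (fun x => G (F x))) L).
Proof.
  eapply lceq_trans. apply ext_comp. apply ext_congr. intros v w. unfold sgl, ext. cbn [flat_map fst snd].
  rewrite !app_nil_r, !coefL_scale, !coefL_single. rewrite map_map. ring.
Qed.

Lemma sgl_id {V} (L : lchain V) : lceq (ext (sgl (fun x => x)) L) L.
Proof.
  intro w. rewrite coefL_ext. change (coefL L w) with (sumL (fun p => fst p * ind (snd p) w)%Z L).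
  apply sumL_ext. intros [k v]. unfold sgl. cbn [fst snd]. rewrite coefL_single, map_id. ring.
Qed.

Section Maps.
Variables C D : cat.
Hypothesis HC : thin C.
Hypothesis HD : thin D.
Variable xD : ob D.
Variable F : ob C -> ob D.
Hypothesis HF : mono C D F.

Definition mapc n (z : chain C n) : chain D n :=
  map (fun p => (fst p, mk D xD n (map F (verts C n (snd p))))) z.

Lemma vchain_mapc n (z : chain C n) : lceq (vchain D n (mapc n z)) (ext (sgl F) (vchain C n z)).
Proof.
  intro w. induction z as [|[k s] z IH]; [reflexivity|].
  unfold mapc, vchain, ext in *. cbn [map flat_map fst snd]. unfold sgl at 1. unfold scale at 1. cbn [map fst snd app].
  rewrite !coefL_cons, IH. cbn [fst snd].
  rewrite mk_verts; auto. 2: apply valid_map; auto; apply verts_valid. 2: rewrite length_map, verts_len; auto.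
  ring.
Qed.
End Maps.

Definition negc {C : cat} {n} (c : chain C n) : chain C n := map (fun p => ((-1) * fst p, snd p))%Z c.

Lemma vchain_negc C n (c : chain C n) : vchain C n (negc c) = scale (-1) (vchain C n c).
Proof. unfold vchain, negc, scale. rewrite !map_map. auto. Qed.
Lemma bd_app C n (c1 c2 : chain C (S n)) : bd (c1 ++ c2) = bd c1 ++ bd c2.
Proof. unfold bd. apply flat_map_app. Qed.

Lemma cycle_lceq C (HC : thin C) n (z : chain C (S n)) :
  (forall t, coef (bd z) t = 0%Z) -> lceq (vchain C n (bd z)) [].
Proof. intro H. apply (lceq_of_ceq C HC n (bd z) []). intro t; rewrite H; reflexivity. Qed.

Theorem acyc_step (C D : cat) (HC : thin C) (HD : thin D) (xC : ob C) (xD : ob D)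
  (r : ob C -> ob D) (i : ob D -> ob C) (K : ob C -> ob C)
  (Hr : mono C D r) (Hi : mono D C i) (HK : mono C C K)
  (H1 : forall x, Rh C x (K x)) (H2 : forall x, Rh C (i (r x)) (K x)) :
  colim_pos_vanish D -> colim_pos_vanish C.
Proof.
  intros HAD n z Hz. apply cycle_lceq in Hz; auto.
  set (L := vchain C (S n) z).
  assert (HzL : lceq (ext bdv L) []) by (unfold L; rewrite <- vchain_bd; auto).
  destruct (homotopy C xC (fun x => x) K (fun a b h => h) HK H1 n z Hz) as [b1 Hb1].
  destruct (homotopy C xC (fun x => i (r x)) K (fun a b h => Hi _ _ (Hr _ _ h)) HK H2 n z Hz) as [b2 Hb2].
  set (z' := mapc C D xD r (S n) z).
  assert (Hz' : forall t, coef (bd z') t = 0%Z).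
  { intro t. change 0%Z with (coef (@nil (Z * simplex D n)) t). apply ceq_of_lceq; auto.
    rewrite vchain_bd; auto. eapply lceq_trans. apply ext_resp. apply vchain_mapc; auto.
    eapply lceq_trans. apply bd_comm. apply ext_resp0. auto. }
  destruct (HAD n z' Hz') as [b3 Hb3].
  apply lceq_of_ceq in Hb3; auto.
  set (b4 := mapc D C xC i (S (S n)) b3).
  assert (Hb4 : lceq (vchain C (S n) (bd b4)) (ext (sgl (fun x => i (r x))) L)).
  { rewrite vchain_bd; auto. eapply lceq_trans. apply ext_resp. apply vchain_mapc; auto.
    eapply lceq_trans. apply bd_comm. rewrite <- vchain_bd; auto.
    eapply lceq_trans. apply ext_resp. apply Hb3. unfold z'.
    eapply lceq_trans. apply ext_resp. apply vchain_mapc; auto. apply sgl_comp. }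
  exists (b2 ++ negc b1 ++ b4). apply ceq_of_lceq; auto.
  intro w. rewrite !bd_app, !vchain_app, !coefL_app.
  rewrite Hb2, Hb4. rewrite vchain_bd, vchain_negc, ext_scale, <- vchain_bd, Hb1 by auto.
  rewrite !coefL_app, !coefL_scale. fold L. rewrite (sgl_id L w). ring.
Qed.

Lemma rst_map2 (A B : Type) (R : A -> A -> Prop) (S : B -> B -> Prop) (f : A -> B) :
  (forall u v, R u v -> S (f u) (f v)) ->
  forall u v, clos_refl_sym_trans A R u v -> clos_refl_sym_trans B S (f u) (f v).
Proof.
  intros H u v h; induction h.
  - apply rst_step; auto.
  - apply rst_refl.
  - apply rst_sym; auto.
  - eapply rst_trans; eauto.
Qed.

Theorem conn_step (C D : cat) (r : ob C -> ob D) (i : ob D -> ob C) (K : ob C -> ob C)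
  (Hi : mono D C i)
  (H1 : forall x, Rh C x (K x)) (H2 : forall x, Rh C (i (r x)) (K x)) :
  connected D -> connected C.
Proof.
  intros [[d0] HD]. split. constructor; exact (i d0).
  assert (Hx : forall x, clos_refl_sym_trans (ob C) (fun a b => inhabited (hom C a b)) x (i (r x))).
  { intro x. eapply rst_trans. apply rst_step; apply H1. apply rst_sym, rst_step; apply H2. }
  intros x y. eapply rst_trans. apply Hx. eapply rst_trans. 2: apply rst_sym, Hx.
  apply (rst_map2 _ _ _ _ i Hi). apply HD.
Qed.

Lemma sumN_sgn k : sumN k sgn = if Nat.even k then 0%Z else 1%Z.
Proof. induction k; auto. cbn [sumN]. rewrite IHk. unfold sgn. rewrite Nat.even_succ, <- Nat.negb_even.
  destruct (Nat.even k); auto. Qed.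

Lemma rem_repeat {A} (a : A) k i : i < k -> rem i (repeat a k) = repeat a (pred k).
Proof. revert i; induction k; intros [|i] H; simpl; try lia; auto. rewrite IHk by lia.
  destruct k; simpl; auto; lia. Qed.

Theorem base_case (C : cat) (HC : thin C) (x0 : ob C) (Hall : forall x y : ob C, x = y) :
  connected C /\ colim_pos_vanish C.
Proof.
  split.
  { split. constructor; exact x0. intros x y. rewrite (Hall x y). apply rst_refl. }
  assert (Hv : forall k (t : simplex C k), verts C k t = repeat x0 (S k)).
  { assert (Hrep : forall l : list (ob C), l = repeat x0 (length l)).
    { induction l; simpl; auto. rewrite (Hall a x0). f_equal; auto. }
    intros k t. rewrite (Hrep (verts C k t)), verts_len. reflexivity. }
  assert (Hval : forall k, valid C (repeat x0 (S k))).
  { intros k; simpl. induction k; simpl; auto. split; auto. constructor; apply cid. }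
  intros n z Hz. apply cycle_lceq in Hz; auto.
  set (L := vchain C (S n) z). set (R := repeat x0 (S (S n))).
  set (s := coefL L R).
  assert (HL : lceq L [(s, R)]).
  { intro w. rewrite coefL_single. unfold ind. destruct (excluded_middle_informative (R = w)) as [<-|Hw].
    - unfold s. ring.
    - unfold L. clear -Hv Hw. induction z as [|[k t] z IH]; [reflexivity|]. unfold vchain in *.
      cbn [map]. rewrite coefL_cons, IH. cbn [fst snd]. rewrite Hv. unfold ind.
      destruct (excluded_middle_informative _); [contradiction|]. ring. }
  assert (Hs : (s * sumN (S (S n)) sgn = 0)%Z).
  { rewrite vchain_bd in Hz; auto. fold L in Hz. pose proof (ext_resp bdv _ _ HL) as E.
    pose proof (E (repeat x0 (S n))) as E1. rewrite Hz, coefL_nil in E1.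
    unfold ext in E1. cbn [flat_map fst snd] in E1. rewrite app_nil_r, coefL_scale in E1.
    unfold bdv in E1. rewrite coefL_mapseq in E1. unfold R in E1. rewrite repeat_length in E1.
    rewrite (sumN_ext _ _ sgn) in E1. lia. intros i Hi. rewrite rem_repeat by lia. simpl pred.
    unfold ind. destruct (excluded_middle_informative _); [ring|congruence]. }
  exists [(if Nat.even n then s else 0%Z, mk C x0 (S (S n)) (repeat x0 (S (S (S n)))))].
  apply ceq_of_lceq; auto. fold L. rewrite vchain_bd; auto. intro w. rewrite HL, coefL_single.
  unfold vchain. cbn [map fst snd]. rewrite mk_verts; auto. 2: apply repeat_length.
  unfold ext. cbn [flat_map fst snd]. rewrite app_nil_r, coefL_scale. unfold bdv. rewrite coefL_mapseq.
  rewrite repeat_length. rewrite (sumN_ext _ _ (fun i => sgn i * ind R w)%Z).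
  2:{ intros i Hi. rewrite rem_repeat by lia. reflexivity. }
  rewrite (sumN_ext _ (fun i => sgn i * ind R w)%Z (fun i => ind R w * sgn i)%Z) by (intros; ring).
  rewrite sumN_mulr, sumN_sgn. rewrite sumN_sgn in Hs.
  change (Nat.even (S (S (S n)))) with (Nat.even (S n)). rewrite Nat.even_succ, <- Nat.negb_even.
  change (Nat.even (S (S n))) with (Nat.even n) in Hs.
  destruct (Nat.even n); simpl in *; lia.
Qed.

Section Words.
Variables (E : Type) (I : E -> E -> Prop).
Hypothesis I_irrefl : forall a, ~ I a a.
Hypothesis I_sym : forall a b, I a b -> I b a.

Definition eqd (x y : E) : {x = y} + {x <> y} := excluded_middle_informative (x = y).

Fixpoint cntw (a : E) (w : list E) : nat :=
  match w with [] => 0 | x :: w' => (if eqd x a then 1 else 0) + cntw a w' end.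
Lemma cntw_app a u v : cntw a (u ++ v) = cntw a u + cntw a v.
Proof. induction u; simpl; auto. rewrite IHu; lia. Qed.
Lemma cntw_In a w : cntw a w > 0 <-> In a w.
Proof. induction w; simpl. split; intros; [lia|contradiction].
  destruct (eqd a0 a); simpl. split; auto; lia. rewrite <- IHw. split; [intro; right; auto|].
  intros [H|H]; [congruence|auto]. Qed.

Lemma teq_cntw a u v : teq I u v -> cntw a u = cntw a v.
Proof.
  intro h; induction h; auto; try lia.
  destruct H as [x0 [y0 [p [q [Hpq [-> ->]]]]]]. rewrite !cntw_app. simpl. lia.
Qed.
Lemma teq_len u v : teq I u v -> length u = length v.
Proof.
  intro h; induction h; auto; try lia.
  destruct H as [x0 [y0 [p [q [Hpq [-> ->]]]]]]. rewrite !length_app. simpl. lia.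
Qed.

Lemma teq_of_cls u v : cls I u = cls I v -> teq I u v.
Proof.
  intro H. assert (E1 : tcls I u = tcls I v) by (apply (f_equal (@proj1_sig _ _) H)).
  assert (H2 : tcls I v v) by apply rst_refl. rewrite <- E1 in H2. exact H2.
Qed.

Fixpoint dla (a : E) (w : list E) : list E :=
  match w with
  | [] => []
  | x :: w' => if excluded_middle_informative (In a w') then x :: dla a w'
               else if eqd x a then w' else x :: w'
  end.
Lemma dla_app a u v : dla a (u ++ v) = if excluded_middle_informative (In a v) then u ++ dla a v else dla a u ++ v.
Proof.
  induction u as [|x u IH].
  - simpl. destruct (excluded_middle_informative (In a v)) as [Hv|Hv]; auto.
    induction v as [|y v IHv]; simpl; auto.
    destruct (excluded_middle_informative (In a v)); [exfalso; apply Hv; simpl; auto|].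
    destruct (eqd y a); subst; [exfalso; apply Hv; simpl; auto|auto].
  - simpl app. cbn [dla]. rewrite IH.
    destruct (excluded_middle_informative (In a v)) as [Hv|Hv];
    destruct (excluded_middle_informative (In a (u ++ v))) as [Huv|Huv].
    + auto.
    + exfalso; apply Huv; apply in_or_app; auto.
    + destruct (excluded_middle_informative (In a u)) as [Hu|Hu]; auto.
      apply in_app_or in Huv; destruct Huv; contradiction.
    + destruct (excluded_middle_informative (In a u)) as [Hu|Hu].
      * exfalso; apply Huv; apply in_or_app; auto.
      * destruct (eqd x a); auto.
Qed.

Lemma dla_last a u : dla a (u ++ [a]) = u.
Proof. rewrite dla_app. destruct (excluded_middle_informative (In a [a])) as [h|h]; [|exfalso; apply h; simpl; auto].
  cbn [dla]. destruct (excluded_middle_informative (In a [])) as [h'|h']; [destruct h'|].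
  destruct (eqd a a); [|congruence]. apply app_nil_r. Qed.
Lemma dla_last_ne a b u : a <> b -> dla a (u ++ [b]) = dla a u ++ [b].
Proof. intro H. rewrite dla_app. destruct (excluded_middle_informative (In a [b])) as [h|]; auto.
  simpl in h. destruct h; [congruence|contradiction]. Qed.

Lemma dla2 a p q : dla a [p; q] = if eqd q a then [p] else if eqd p a then [q] else [p; q].
Proof.
  cbn [dla]. repeat match goal with
  | |- context [excluded_middle_informative ?P] => destruct (excluded_middle_informative P)
  | |- context [eqd ?x ?y] => destruct (eqd x y) end; simpl in *; subst; try tauto; try congruence.
Qed.

Lemma dla_step a u v : trace_step I u v -> teq I (dla a u) (dla a v).
Proof.
  intros [x [y [p [q [Hpq [-> ->]]]]]].
  assert (Hpq' : p <> q) by (intro; subst; eapply I_irrefl; eauto).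
  replace (x ++ p :: q :: y) with ((x ++ [p; q]) ++ y) by (rewrite <- app_assoc; auto).
  replace (x ++ q :: p :: y) with ((x ++ [q; p]) ++ y) by (rewrite <- app_assoc; auto).
  rewrite !(dla_app a (x ++ _) y). destruct (excluded_middle_informative (In a y)).
  - rewrite <- !app_assoc. apply rst_step. exists x, (dla a y), p, q. auto.
  - rewrite !dla_app. destruct (excluded_middle_informative (In a [p; q])) as [h1|h1];
    destruct (excluded_middle_informative (In a [q; p])) as [h2|h2].
    + rewrite !dla2. destruct (eqd q a); destruct (eqd p a); subst; try congruence; try apply rst_refl.
      exfalso. simpl in h1. tauto.
    + exfalso; apply h2; simpl in *; tauto.
    + exfalso; apply h1; simpl in *; tauto.
    + rewrite <- !app_assoc. apply rst_step. exists (dla a x), y, p, q. auto.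
Qed.
Lemma dla_teq a u v : teq I u v -> teq I (dla a u) (dla a v).
Proof. intro h; induction h. apply dla_step; auto. apply rst_refl. apply rst_sym; auto. eapply rst_trans; eauto. Qed.

Lemma teq_rev u v : teq I u v -> teq I (rev u) (rev v).
Proof.
  intro h; induction h. 2: apply rst_refl. 2: apply rst_sym; auto. 2: eapply rst_trans; eauto.
  destruct H as [x0 [y0 [p [q [Hpq [-> ->]]]]]]. rewrite !rev_app_distr. simpl.
  apply rst_step. exists (rev y0), (rev x0), q, p. split; auto. rewrite <- !app_assoc. simpl. auto.
Qed.

Definition prj (a b : E) (w : list E) := filter (fun x => if eqd x a then true else if eqd x b then true else false) w.
Lemma prj_teq a b u v : ~ I a b -> teq I u v -> prj a b u = prj a b v.
Proof.
  intros Hab h; induction h; auto; try congruence.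
  destruct H as [x0 [y0 [p [q [Hpq [-> ->]]]]]]. unfold prj. rewrite !filter_app. f_equal. simpl.
  destruct (eqd p a); destruct (eqd q a); destruct (eqd p b); destruct (eqd q b); subst; auto;
  try (exfalso; apply (I_irrefl _ Hpq)); try (exfalso; apply Hab; auto); try (exfalso; apply Hab; apply I_sym; auto).
Qed.
Lemma teq_swap2 a b : a <> b -> teq I [b; a] [a; b] -> I a b.
Proof.
  intros Hne H. apply NNPP. intro Hn. apply prj_teq with (a := a) (b := b) in H; auto.
  unfold prj in H. simpl in H. destruct (eqd b a); [congruence|]. destruct (eqd b b); [|congruence].
  destruct (eqd a a); [|congruence]. injection H; intros; congruence.
Qed.

Lemma teq_comm a w : (forall b, In b w -> I a b) -> teq I (a :: w) (w ++ [a]).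
Proof.
  induction w as [|b w IH]; simpl; intros H. apply rst_refl.
  eapply rst_trans. apply rst_step. exists [], w, a, b. split; auto.
  apply (teq_app_l (I := I) (u := a :: w) (v := w ++ [a]) [b]). apply IH; auto.
Qed.
End Words.

Section Traces.
Variables (E : Type) (I : E -> E -> Prop).
Hypothesis I_irrefl : forall a, ~ I a a.
Hypothesis I_sym : forall a b, I a b -> I b a.

Notation M := (trace_monoid I).
Definition L1 (a : E) : M := cls I [a].
Definition cnt (a : E) (m : M) : nat := cntw E a (rep m).
Definition tlen (m : M) : nat := length (rep m).

Lemma cnt_cls a w : cnt a (cls I w) = cntw E a w.
Proof. unfold cnt. symmetry. apply (teq_cntw E I). apply rep_cls. Qed.
Lemma tlen_cls w : tlen (cls I w) = length w.
Proof. unfold tlen. symmetry. apply (teq_len E I). apply rep_cls. Qed.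
Lemma cnt_mul a (x y : M) : cnt a (mmul x y) = cnt a x + cnt a y.
Proof. revert x y. refine (tm_ind _ _); intro u. refine (tm_ind _ _); intro v.
  rewrite mmul_cls, !cnt_cls, cntw_app; auto. Qed.
Lemma tlen_mul (x y : M) : tlen (mmul x y) = tlen x + tlen y.
Proof. revert x y. refine (tm_ind _ _); intro u. refine (tm_ind _ _); intro v.
  rewrite mmul_cls, !tlen_cls, length_app; auto. Qed.
Lemma cnt_one a : cnt a (mone I) = 0.
Proof. unfold mone. rewrite cnt_cls. auto. Qed.
Lemma cnt_L a b : cnt b (L1 a) = if eqd E a b then 1 else 0.
Proof. unfold L1. rewrite cnt_cls. simpl. destruct (eqd E a b); auto. Qed.
Lemma tlen_L a : tlen (L1 a) = 1.
Proof. unfold L1. rewrite tlen_cls. auto. Qed.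
Lemma tlen0 m : tlen m = 0 -> m = mone I.
Proof. revert m; refine (tm_ind _ _); intros w H. rewrite tlen_cls in H. destruct w; simpl in H; try lia. auto. Qed.
Lemma mul_eq_one (x y : M) : mmul x y = mone I -> x = mone I /\ y = mone I.
Proof. intro H. assert (tlen (mmul x y) = 0) by (rewrite H; unfold mone; rewrite tlen_cls; auto).
  rewrite tlen_mul in H0. split; apply tlen0; lia. Qed.

Lemma trace_ind (P : M -> Prop) : P (mone I) -> (forall x a, P x -> P (mmul x (L1 a))) -> forall m, P m.
Proof.
  intros H0 HS. refine (tm_ind _ _). intro w. induction w using rev_ind. exact H0.
  rewrite <- mmul_cls. apply HS. auto.
Qed.

Lemma rcancel1 (x y : M) a : mmul x (L1 a) = mmul y (L1 a) -> x = y.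
Proof.
  revert x y. refine (tm_ind _ _); intro u. refine (tm_ind _ _); intro v. unfold L1. rewrite !mmul_cls.
  intro H. apply teq_of_cls in H. apply (dla_teq E I I_irrefl a) in H. rewrite !dla_last in H.
  apply cls_eq; auto.
Qed.
Lemma rcancel (x y z : M) : mmul x z = mmul y z -> x = y.
Proof.
  revert x y. induction z using trace_ind; intros x y H.
  - rewrite !mmul_1r in H; auto.
  - rewrite !mmul_assoc in H. apply rcancel1 in H. auto.
Qed.

Definition trev (m : M) : M := cls I (rev (rep m)).
Lemma trev_cls w : trev (cls I w) = cls I (rev w).
Proof. unfold trev. apply cls_eq. apply teq_rev; auto. apply rst_sym, rep_cls. Qed.
Lemma trev_mul (x y : M) : trev (mmul x y) = mmul (trev y) (trev x).
Proof. revert x y. refine (tm_ind _ _); intro u. refine (tm_ind _ _); intro v.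
  rewrite mmul_cls, !trev_cls, mmul_cls, rev_app_distr. auto. Qed.
Lemma trev_inv (x : M) : trev (trev x) = x.
Proof. revert x; refine (tm_ind _ _); intro u. rewrite !trev_cls, rev_involutive. auto. Qed.
Lemma lcancel (x y z : M) : mmul z x = mmul z y -> x = y.
Proof. intro H. apply (f_equal trev) in H. rewrite !trev_mul in H. apply rcancel in H.
  rewrite <- (trev_inv x), <- (trev_inv y), H. auto. Qed.

Lemma L1_comm a b : I a b -> mmul (L1 a) (L1 b) = mmul (L1 b) (L1 a).
Proof. intro H. unfold L1. rewrite !mmul_cls. apply cls_eq. apply rst_step. exists [], [], a, b. auto. Qed.

Lemma levi (u v : M) a b : mmul u (L1 a) = mmul v (L1 b) -> a <> b ->
  I a b /\ exists w, u = mmul w (L1 b) /\ v = mmul w (L1 a).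
Proof.
  revert u v. refine (tm_ind _ _); intro u'. refine (tm_ind _ _); intro v'. unfold L1. rewrite !mmul_cls.
  intros H Hab. apply teq_of_cls in H.
  pose proof (dla_teq E I I_irrefl a _ _ H) as Ha. rewrite dla_last, dla_last_ne in Ha by auto.
  pose proof (dla_teq E I I_irrefl b _ _ H) as Hb. rewrite dla_last, dla_last_ne in Hb by auto.
  set (w1 := dla E a v') in *. set (w2 := dla E b u') in *.
  (* u' ~ w1 b ; v' ~ w2 a *)
  assert (E1 : teq I (w1 ++ [b; a]) (w2 ++ [a; b])).
  { apply rst_trans with (u' ++ [a]).
    { replace (w1 ++ [b; a]) with ((w1 ++ [b]) ++ [a]) by (rewrite <- app_assoc; auto).
      apply teq_app_r. apply rst_sym; auto. }
    apply rst_trans with (v' ++ [b]). exact H.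
    replace (w2 ++ [a; b]) with ((w2 ++ [a]) ++ [b]) by (rewrite <- app_assoc; auto).
    apply teq_app_r. apply rst_sym; auto. }
  assert (E2 : teq I (w1 ++ [a]) (w2 ++ [a])).
  { pose proof (dla_teq E I I_irrefl b _ _ E1) as X.
    replace (w1 ++ [b; a]) with ((w1 ++ [b]) ++ [a]) in X by (rewrite <- app_assoc; auto).
    rewrite dla_last_ne, dla_last in X by auto.
    replace (w2 ++ [a; b]) with ((w2 ++ [a]) ++ [b]) in X by (rewrite <- app_assoc; auto).
    rewrite dla_last in X. exact X. }
  assert (E3 : cls I w1 = cls I w2).
  { apply (rcancel1 _ _ a). unfold L1. rewrite !mmul_cls. apply cls_eq; auto. }
  split.
  - apply teq_swap2; auto. apply teq_of_cls. apply (lcancel _ _ (cls I w1)).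
    rewrite !mmul_cls. rewrite (cls_eq E1). rewrite <- mmul_cls, <- E3, mmul_cls. reflexivity.
  - exists (cls I w1). split.
    + unfold L1; rewrite mmul_cls; apply cls_eq; exact Ha.
    + rewrite E3; unfold L1; rewrite mmul_cls; apply cls_eq; apply rst_sym; exact Hb.
Qed.

Definition cm (a : E) (m : M) := forall b, cnt b m > 0 -> I a b.
Lemma cm_cnt0 a m : cm a m -> cnt a m = 0.
Proof. intro H. destruct (cnt a m) eqn:E0; auto. exfalso. apply (I_irrefl a). apply H. lia. Qed.
Lemma cm_mul a (x y : M) : cm a (mmul x y) <-> cm a x /\ cm a y.
Proof. unfold cm. split. intro H; split; intros b Hb; apply H; rewrite cnt_mul; lia.
  intros [H1 H2] b Hb. rewrite cnt_mul in Hb. destruct (cnt b x) eqn:?. apply H2; lia. apply H1; lia. Qed.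
Lemma cm_one a : cm a (mone I).
Proof. intros b Hb. rewrite cnt_one in Hb. lia. Qed.
Lemma cm_L a b : I a b -> cm a (L1 b).
Proof. intros H c Hc. rewrite cnt_L in Hc. destruct (eqd E b c); subst; auto; lia. Qed.
Lemma cm_comm a m : cm a m -> mmul (L1 a) m = mmul m (L1 a).
Proof.
  revert m. refine (tm_ind _ _); intros w H. unfold L1. rewrite !mmul_cls. apply cls_eq.
  simpl. apply (teq_comm E I I_sym). intros b Hb. apply H. rewrite cnt_cls. apply cntw_In. auto.
Qed.

Lemma lemL (u v w : M) a : mmul u v = mmul w (L1 a) ->
  (exists v', v = mmul v' (L1 a)) \/ (exists u', u = mmul u' (L1 a) /\ cm a v).
Proof.
  revert w. induction v using trace_ind; intros w H.
  - right. rewrite mmul_1r in H. exists w. split; auto. apply cm_one.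
  - rename a0 into b. rewrite mmul_assoc in H.
    destruct (eqd E b a) as [->|Hne]. left; eauto.
    destruct (levi _ _ _ _ H Hne) as [Hba [w' [E1 E2]]].
    destruct (IHv w' E1) as [[v' ->]|[u' [-> Hc]]].
    + left. exists (mmul v' (L1 b)). rewrite <- !mmul_assoc, L1_comm; auto.
    + right. exists u'. split; auto. apply cm_mul. split; auto. apply cm_L; auto.
Qed.
End Traces.

Section Cliques.
Variables (E : Type) (I : E -> E -> Prop) (lt : E -> E -> Prop).
Hypothesis I_irrefl : forall a, ~ I a a.
Hypothesis I_sym : forall a b, I a b -> I b a.
Hypothesis lt_irrefl : forall a, ~ lt a a.
Hypothesis lt_trans : forall a b c, lt a b -> lt b c -> lt a c.
Hypothesis lt_total : forall a b, lt a b \/ a = b \/ lt b a.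

Notation M := (trace_monoid I).
Definition pw (l : list E) := forall x y, In x l -> In y l -> x <> y -> I x y.
Definition clq (c : M) := exists l, NoDup l /\ pw l /\ c = cls I l.

Lemma cntw_nodup a l : NoDup l -> cntw E a l <= 1.
Proof. induction 1; simpl; auto. destruct (eqd E x a); subst; auto.
  assert (cntw E a l = 0). { destruct (cntw E a l) eqn:h; auto. exfalso. apply H. apply (cntw_In E). lia. } lia. Qed.

Lemma clq_one : clq (mone I).
Proof. exists []. split. constructor. split. intros x y []. auto. Qed.
Lemma clq_cnt_le1 c a : clq c -> cnt E I a c <= 1.
Proof. intros [l [H1 [H2 ->]]]. rewrite cnt_cls. apply cntw_nodup; auto. Qed.
Lemma clq_pair c a b : clq c -> cnt E I a c > 0 -> cnt E I b c > 0 -> a <> b -> I a b.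
Proof. intros [l [H1 [H2 ->]]]. rewrite !cnt_cls. intros Ha Hb. apply H2; apply (cntw_In E); auto. Qed.

Lemma clq_split c a : clq c -> cnt E I a c > 0 -> exists c', c = mmul c' (L1 E I a) /\ clq c'.
Proof.
  intros [l [H1 [H2 ->]]] Ha. rewrite cnt_cls in Ha. apply (cntw_In E) in Ha.
  apply in_split in Ha. destruct Ha as [l1 [l2 ->]].
  exists (cls I (l1 ++ l2)). split.
  - unfold L1. rewrite mmul_cls. apply cls_eq. rewrite <- app_assoc. apply teq_app_l.
    apply (teq_comm E I I_sym). intros b Hb. apply H2; try (apply in_or_app; simpl; auto).
    intro; subst. apply NoDup_remove_2 in H1. apply H1. apply in_or_app; auto.
  - exists (l1 ++ l2). split. eapply NoDup_remove_1; eauto. split; auto.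
    intros x y Hx Hy Hxy. apply H2; auto; apply in_app_or in Hx; apply in_app_or in Hy; apply in_or_app; simpl; tauto.
Qed.

Lemma clq_cons c a : clq c -> cm E I a c -> clq (mmul (L1 E I a) c).
Proof.
  intros [l [H1 [H2 ->]]] Hc. exists (a :: l). unfold L1. rewrite mmul_cls. split; [|split; auto].
  - constructor; auto. intro Ha. pose proof (cm_cnt0 E I I_irrefl a _ Hc). rewrite cnt_cls in H.
    assert (cntw E a l > 0) by (apply (cntw_In E); auto). lia.
  - intros x y [->|Hx] [->|Hy] Hxy; try congruence.
    + apply Hc. rewrite cnt_cls. apply (cntw_In E); auto.
    + apply I_sym, Hc. rewrite cnt_cls. apply (cntw_In E); auto.
    + apply H2; auto.
Qed.

Lemma union_T_clq c : union_T lt c -> clq c.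
Proof.
  intros [Ev [[Hc _] [l [Hl [Hs ->]]]]]. exists l. split; [|split].
  - apply Sorted_StronglySorted in Hs; [|exact lt_trans]. clear -Hs lt_irrefl. induction Hs; constructor; auto.
    intro Ha. rewrite Forall_forall in H. apply (lt_irrefl a); auto.
  - intros x y Hx Hy Hxy. apply Hc; auto.
  - reflexivity.
Qed.

Fixpoint ins (a : E) (l : list E) : list E :=
  match l with [] => [a] | b :: l' => if excluded_middle_informative (lt a b) then a :: b :: l' else b :: ins a l' end.
Fixpoint isort (l : list E) : list E := match l with [] => [] | a :: l' => ins a (isort l') end.
Lemma ins_In a l x : In x (ins a l) <-> x = a \/ In x l.
Proof. induction l; simpl. firstorder congruence. destruct (excluded_middle_informative (lt a a0)); simpl; rewrite ?IHl; firstorder congruence. Qed.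
Lemma isort_In l x : In x (isort l) <-> In x l.
Proof. induction l; simpl. tauto. rewrite ins_In, IHl. firstorder congruence. Qed.
Lemma ins_sorted a l : StronglySorted lt l -> ~ In a l -> StronglySorted lt (ins a l).
Proof.
  induction 1; intro Ha; simpl. constructor; constructor.
  destruct (excluded_middle_informative (lt a a0)).
  - constructor. constructor; auto. constructor; auto. rewrite Forall_forall in *. intros x Hx. eauto.
  - constructor. apply IHStronglySorted. intro; apply Ha; simpl; auto.
    rewrite Forall_forall in *. intros x Hx. apply ins_In in Hx. destruct Hx as [->|Hx]; auto.
    destruct (lt_total a a0) as [h|[h|h]]; try contradiction; auto. subst; exfalso; apply Ha; simpl; auto.
Qed.
Lemma isort_sorted l : NoDup l -> StronglySorted lt (isort l).
Proof. induction 1; simpl. constructor. apply ins_sorted; auto. rewrite isort_In; auto. Qed.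
Lemma ins_teq a l : (forall b, In b l -> I a b) -> teq I (ins a l) (a :: l).
Proof.
  induction l as [|b l IH]; simpl; intros H. apply rst_refl.
  destruct (excluded_middle_informative (lt a b)). apply rst_refl.
  eapply rst_trans. apply (teq_app_l (I := I) (u := ins a l) (v := a :: l) [b]). apply IH; auto.
  apply rst_step. exists [], l, b, a. split; [apply I_sym; apply H; simpl; auto | auto].
Qed.
Lemma isort_teq l : NoDup l -> pw l -> teq I (isort l) l.
Proof.
  induction l as [|a l IH]; simpl; intros Hn Hp. apply rst_refl.
  inversion Hn; subst. eapply rst_trans. apply ins_teq. intros b Hb. rewrite isort_In in Hb.
  apply Hp; simpl; auto. intro; subst; auto.
  apply (teq_app_l (I := I) (u := isort l) (v := l) [a]). apply IH; auto.
  intros x y Hx Hy; apply Hp; simpl; auto.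
Qed.

Lemma exists_maximal (l : list E) : pw l -> NoDup l ->
  exists A, maximal_commuting_set I A /\ forall x, In x l -> A x.
Proof.
  intros Hp Hn.
  set (P := fun A : E -> Prop => commuting_set I A /\ ((forall x, ~ A x) \/ forall x, In x l -> A x)).
  destruct (@classical_sets.Zorn_bigcup E P) as [A [[HA1 HA2] HAmax]].
  - intros F HF Htot. split.
    + intros a b [X FX Xa] [Y FY Yb] Hab. destruct (Htot X Y FX FY) as [h|h]; unfold classical_sets.subset in h;
      [apply (proj1 (HF Y FY)) | apply (proj1 (HF X FX))]; auto.
    + destruct (classic (exists X, F X /\ forall x, In x l -> X x)) as [[X [FX HX]]|Hno].
      * right. intros x Hx. exists X; auto.
      * left. intros x [X FX Xx]. destruct (proj2 (HF X FX)) as [h|h]. apply (h x); auto.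
        apply Hno; eauto.
  - assert (Hl : forall x, In x l -> A x).
    { destruct HA2 as [h|h]; auto. intros x Hx. exfalso. apply (HAmax (fun y => In y l)).
      split. intros t Ht. exfalso; apply (h t); auto. intro Hs. apply (h x). apply Hs; auto.
      split. intros a b Ha Hb Hab; apply Hp; auto. right; auto. }
    exists A. split; auto. split; auto.
    intros B HB HAB x Bx. apply NNPP. intro nAx. apply (HAmax B).
    split. intros t Ht; apply HAB; auto. intro h. apply nAx. apply h; auto.
    unfold P. split; [exact HB | right; intros y Hy; apply HAB; auto].
Qed.

Lemma clq_union_T c : clq c -> union_T lt c.
Proof.
  intros [l [Hn [Hp ->]]]. destruct (exists_maximal l Hp Hn) as [A [HA Hl]].
  exists A. split; auto. exists (isort l). split. intros x Hx; apply Hl; apply isort_In; auto.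
  split. apply StronglySorted_Sorted. apply isort_sorted; auto.
  apply cls_eq. apply rst_sym. apply isort_teq; auto.
Qed.
End Cliques.

Section Comma.
Variables (E : Type) (I : E -> E -> Prop) (lt : E -> E -> Prop).
Hypothesis I_irrefl : forall a, ~ I a a.
Hypothesis I_sym : forall a b, I a b -> I b a.
Hypothesis lt_irrefl : forall a, ~ lt a a.
Hypothesis lt_trans : forall a b c, lt a b -> lt b c -> lt a c.
Hypothesis lt_total : forall a b, lt a b \/ a = b \/ lt b a.

Notation M := (trace_monoid I).
Definition Sf := Defs.incl (FM I) (union_T lt).
Definition Cm (d : M) := comma Sf d.

Definition oc {d} (o : ob (Cm d)) : M := proj1_sig (projT1 o).
Definition of {d} (o : ob (Cm d)) : M := fst (proj1_sig (projT2 o)).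
Definition og {d} (o : ob (Cm d)) : M := snd (proj1_sig (projT2 o)).

Lemma o_eq d (o : ob (Cm d)) : mmul (mmul (og o) (oc o)) (of o) = d.
Proof. destruct o as [[c Hc] [[f g] H]]. exact H. Qed.
Lemma o_T d (o : ob (Cm d)) : union_T lt (oc o).
Proof. destruct o as [[c Hc] [[f g] H]]. exact Hc. Qed.

Lemma obj_ext d (o1 o2 : ob (Cm d)) : oc o1 = oc o2 -> of o1 = of o2 -> og o1 = og o2 -> o1 = o2.
Proof.
  destruct o1 as [[c1 Hc1] [[f1 g1] H1]], o2 as [[c2 Hc2] [[f2 g2] H2]]. unfold oc, of, og; simpl.
  intros -> -> ->. rewrite (proof_irrelevance _ Hc1 Hc2). rewrite (proof_irrelevance _ H1 H2). reflexivity.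
Qed.

Lemma union_T_one : union_T lt (mone I).
Proof. apply (clq_union_T E I lt I_sym lt_irrefl lt_trans lt_total). apply clq_one. Qed.

Definition defobj (d : M) : ob (Cm d).
Proof.
  refine (existT _ (exist _ (mone I) union_T_one) (exist _ (d, mone I) _)).
  simpl. rewrite mmul_1l, mmul_1l. reflexivity.
Defined.

Definition mko (d c f g : M) : ob (Cm d) :=
  match excluded_middle_informative (union_T lt c /\ mmul (mmul g c) f = d) with
  | left H => existT (fun x : ob (full_sub (FM I) (union_T lt)) => hom (FM I) (proj1_sig x) d)
                (exist _ c (proj1 H)) (exist _ (f, g) (proj2 H))
  | right _ => defobj d
  end.

Definition cp {d} (o : ob (Cm d)) c f g := oc o = c /\ of o = f /\ og o = g.

Lemma mko_spec d c f g : union_T lt c -> mmul (mmul g c) f = d -> cp (mko d c f g) c f g.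
Proof.
  intros H1 H2. unfold mko. destruct (excluded_middle_informative _) as [h|h].
  - unfold cp, oc, of, og; simpl; auto.
  - exfalso; auto.
Qed.

Lemma Rh_iff d (o1 o2 : ob (Cm d)) : Rh (Cm d) o1 o2 <->
  exists x y, mmul (mmul y (oc o1)) x = oc o2 /\ mmul x (of o2) = of o1 /\ mmul (og o2) y = og o1.
Proof.
  destruct o1 as [[c1 Hc1] [[f1 g1] H1]], o2 as [[c2 Hc2] [[f2 g2] H2]]. unfold oc, of, og; simpl.
  split.
  - intros [[[[x y] Hxy] Hu]]. simpl in *. exists x, y. split; auto.
    apply (f_equal (@proj1_sig _ _)) in Hu. simpl in Hu. injection Hu; auto.
  - intros [x [y [E1 [E2 E3]]]]. constructor.
    refine (exist _ (exist _ (x, y) E1) _). apply subset_eq_compat. simpl. rewrite E2, E3. reflexivity.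
Qed.

Lemma Cm_thin d : thin (Cm d).
Proof.
  intros [[c1 Hc1] [[f1 g1] H1]] [[c2 Hc2] [[f2 g2] H2]] [u Hu] [u' Hu'].
  destruct u as [[x y] Hxy], u' as [[x' y'] Hxy']. simpl in *.
  pose proof (f_equal (@proj1_sig _ _) Hu) as K. pose proof (f_equal (@proj1_sig _ _) Hu') as K'.
  simpl in K, K'. injection K as E1 E2. injection K' as E1' E2'.
  assert (x = x') by (apply (rcancel E I I_irrefl _ _ f2); congruence).
  assert (y = y') by (apply (lcancel E I I_irrefl I_sym _ _ g2); congruence). subst x' y'.
  assert (Hxy = Hxy') by apply proof_irrelevance. subst Hxy'.
  f_equal. apply proof_irrelevance.
Qed.

Lemma mono_iff d1 d2 (F : ob (Cm d1) -> ob (Cm d2)) :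
  (forall o1 o2, Rh (Cm d1) o1 o2 -> Rh (Cm d2) (F o1) (F o2)) -> mono (Cm d1) (Cm d2) F.
Proof. auto. Qed.

End Comma.

Section Step.
Variables (E : Type) (I : E -> E -> Prop) (lt : E -> E -> Prop).
Hypothesis I_irrefl : forall a, ~ I a a.
Hypothesis I_sym : forall a b, I a b -> I b a.
Hypothesis lt_irrefl : forall a, ~ lt a a.
Hypothesis lt_trans : forall a b c, lt a b -> lt b c -> lt a c.
Hypothesis lt_total : forall a b, lt a b \/ a = b \/ lt b a.

Notation M := (trace_monoid I).
Variable d' : M.
Variable a : E.
Notation A := (L1 E I a).
Notation d := (mmul d' A).
Notation C := (Cm E I lt d).
Notation D := (Cm E I lt d').

Lemma rc (x y z : M) : mmul x z = mmul y z -> x = y.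
Proof. apply rcancel; auto. Qed.
Lemma cmc (m : M) : cm E I a m -> mmul A m = mmul m A.
Proof. apply cm_comm; auto. Qed.
Lemma lL (u v w : M) : mmul u v = mmul w A ->
  (exists v', v = mmul v' A) \/ (exists u', u = mmul u' A /\ cm E I a v).
Proof. apply lemL; auto. Qed.
Lemma cntA : cnt E I a A = 1.
Proof. rewrite cnt_L. destruct (eqd E a a); congruence. Qed.
Lemma toT c : clq E I c -> union_T lt c.
Proof. apply clq_union_T; auto. Qed.
Lemma ofT c : union_T lt c -> clq E I c.
Proof. apply union_T_clq; auto. Qed.

Definition rq (x : M) : M :=
  match excluded_middle_informative (exists x', x = mmul x' A) with
  | left H => proj1_sig (constructive_indefinite_description _ H)
  | right _ => x end.
Lemma rq_spec x x' : x = mmul x' A -> rq x = x'.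
Proof. intro H. unfold rq. destruct (excluded_middle_informative _) as [h|h].
  - destruct (constructive_indefinite_description _ h) as [z Hz]. simpl. apply (rc _ _ A). congruence.
  - exfalso; eauto. Qed.

Definition caseI (o : ob C) := exists f', of E I lt o = mmul f' A.
Definition divc (o : ob C) := exists c', oc E I lt o = mmul c' A.

Definition r (o : ob C) : ob D :=
  if excluded_middle_informative (caseI o) then mko E I lt I_sym lt_irrefl lt_trans lt_total d' (oc E I lt o) (rq (of E I lt o)) (og E I lt o)
  else if excluded_middle_informative (divc o) then mko E I lt I_sym lt_irrefl lt_trans lt_total d' (rq (oc E I lt o)) (of E I lt o) (og E I lt o)
  else mko E I lt I_sym lt_irrefl lt_trans lt_total d' (oc E I lt o) (of E I lt o) (rq (og E I lt o)).
Definition K (o : ob C) : ob C :=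
  if excluded_middle_informative (caseI o \/ divc o) then o
  else mko E I lt I_sym lt_irrefl lt_trans lt_total d (mmul A (oc E I lt o)) (of E I lt o) (rq (og E I lt o)).
Definition iota (o : ob D) : ob C :=
  mko E I lt I_sym lt_irrefl lt_trans lt_total d (oc E I lt o) (mmul (of E I lt o) A) (og E I lt o).

Lemma F1 o : ~ caseI o -> (exists u', mmul (og E I lt o) (oc E I lt o) = mmul u' A) /\ cm E I a (of E I lt o).
Proof. intro h. destruct (lL _ _ d' (o_eq E I lt _ o)) as [H|[u' [H1 H2]]]. contradiction. eauto. Qed.
Lemma F2 o : ~ caseI o -> ~ divc o ->
  (exists g', og E I lt o = mmul g' A) /\ cm E I a (oc E I lt o) /\ cm E I a (of E I lt o).
Proof. intros h1 h2. destruct (F1 o h1) as [[u' Hu] Hf].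
  destruct (lL _ _ _ Hu) as [H|[g' [H1 H2]]]. contradiction. eauto. Qed.

Lemma rI o f' : of E I lt o = mmul f' A -> cp E I lt (r o) (oc E I lt o) f' (og E I lt o).
Proof.
  intro H. unfold r. destruct (excluded_middle_informative (caseI o)) as [h|h]; [|exfalso; apply h; exists f'; exact H].
  rewrite (rq_spec _ _ H). apply mko_spec. apply o_T. apply (rc _ _ A).
  rewrite <- mmul_assoc, <- H. apply o_eq.
Qed.
Lemma rII o c' : ~ caseI o -> oc E I lt o = mmul c' A -> cp E I lt (r o) c' (of E I lt o) (og E I lt o).
Proof.
  intros h H. unfold r. destruct (excluded_middle_informative (caseI o)) as [h'|h']; [contradiction|].
  destruct (excluded_middle_informative (divc o)) as [h2|h2]; [|exfalso; apply h2; exists c'; exact H].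
  rewrite (rq_spec _ _ H). destruct (F1 o h) as [_ Hf]. apply mko_spec.
  - pose proof (ofT _ (o_T E I lt _ o)) as Hq. rewrite H in Hq.
    destruct (clq_split E I I_sym _ a Hq) as [c'' [E1 E2]]. rewrite cnt_mul, cntA; lia.
    apply rc in E1. subst. apply toT; auto.
  - apply (rc _ _ A). pose proof (o_eq E I lt _ o) as Eo. rewrite H in Eo.
    rewrite <- !mmul_assoc in Eo |- *. rewrite <- Eo. f_equal. f_equal. rewrite cmc; auto.
Qed.
Lemma rIII o g' : ~ caseI o -> ~ divc o -> og E I lt o = mmul g' A -> cp E I lt (r o) (oc E I lt o) (of E I lt o) g'.
Proof.
  intros h1 h2 H. unfold r. destruct (excluded_middle_informative (caseI o)) as [h'|h']; [contradiction|].
  destruct (excluded_middle_informative (divc o)) as [h3|h3]; [contradiction|].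
  rewrite (rq_spec _ _ H). destruct (F2 o h1 h2) as [_ [Hc Hf]]. apply mko_spec. apply o_T.
  apply (rc _ _ A). pose proof (o_eq E I lt _ o) as Eo. rewrite H in Eo.
  rewrite <- !mmul_assoc in Eo |- *. rewrite <- Eo. f_equal. rewrite <- (cmc _ Hf), mmul_assoc, <- (cmc _ Hc).
  rewrite mmul_assoc. reflexivity.
Qed.
Lemma K_id o : caseI o \/ divc o -> K o = o.
Proof. intro h. unfold K. destruct (excluded_middle_informative _); [auto|contradiction]. Qed.
Lemma KIII o g' : ~ caseI o -> ~ divc o -> og E I lt o = mmul g' A ->
  cp E I lt (K o) (mmul A (oc E I lt o)) (of E I lt o) g'.
Proof.
  intros h1 h2 H. unfold K. destruct (excluded_middle_informative _) as [h|h]; [exfalso; tauto|].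
  rewrite (rq_spec _ _ H). destruct (F2 o h1 h2) as [_ [Hc Hf]]. apply mko_spec.
  - apply toT. apply clq_cons; auto. apply ofT. apply o_T.
  - rewrite <- (o_eq E I lt _ o), H. rewrite !mmul_assoc. reflexivity.
Qed.
Lemma iota_spec o : cp E I lt (iota o) (oc E I lt o) (mmul (of E I lt o) A) (og E I lt o).
Proof. apply mko_spec. apply o_T. rewrite mmul_assoc, o_eq. reflexivity. Qed.

Lemma Rh_cp dd (o1 o2 : ob (Cm E I lt dd)) c1 f1 g1 c2 f2 g2 : cp E I lt o1 c1 f1 g1 -> cp E I lt o2 c2 f2 g2 ->
  (exists x y, mmul (mmul y c1) x = c2 /\ mmul x f2 = f1 /\ mmul g2 y = g1) -> Rh (Cm E I lt dd) o1 o2.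
Proof. intros [<- [<- <-]] [<- [<- <-]] H. apply Rh_iff. auto. Qed.

Ltac rcA := apply (rc _ _ A).
Lemma cm0 m : cm E I a m -> cnt E I a m = 0.
Proof. apply (cm_cnt0 E I I_irrefl). Qed.

Lemma mono_r : mono C D r.
Proof.
  intros o1 o2 H. apply Rh_iff in H. destruct H as [x [y [Ec [Ef Eg]]]].
  destruct (classic (caseI o2)) as [[f2' Hf2]|nI2].
  -
    assert (Hf1 : of E I lt o1 = mmul (mmul x f2') A) by (rewrite <- Ef, Hf2, mmul_assoc; auto).
    eapply Rh_cp. apply rI; eauto. apply rI; eauto. exists x, y. auto.
  - destruct (F1 o2 nI2) as [_ Hf2].
    destruct (classic (divc o2)) as [[c2' Hc2]|nd2].
    +
      destruct (classic (caseI o1)) as [[f1' Hf1]|nI1].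
      * destruct (lL x (of E I lt o2) f1') as [[v' Hv]|[x' [Hx _]]].
        { rewrite Ef; auto. }
        { exfalso; apply nI2; exists v'; auto. }
        eapply Rh_cp. apply rI; eauto. apply rII; eauto. exists x', y. split; [|split; auto].
        { rcA. rewrite <- Hc2, <- Ec, Hx. rewrite !mmul_assoc. auto. }
        { rcA. rewrite <- Hf1, <- Ef, Hx. rewrite <- !mmul_assoc. f_equal. symmetry; apply cmc; auto. }
      * destruct (classic (divc o1)) as [[c1' Hc1]|nd1].
        -- assert (Hx : cm E I a x).
           { pose proof (ofT _ (o_T E I lt _ o2)) as Q.
             assert (Hc : cnt E I a (oc E I lt o2) > 0) by (rewrite Hc2, cnt_mul, cntA; lia).
             assert (H0 : cnt E I a x = 0).
             { pose proof (clq_cnt_le1 E I _ a Q). rewrite <- Ec, Hc1, !cnt_mul, cntA in H. lia. }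
             intros b Hb. apply (clq_pair E I _ a b Q); auto.
             rewrite <- Ec, !cnt_mul. lia. intro; subst; lia. }
           eapply Rh_cp. apply rII; eauto. apply rII; eauto. exists x, y. split; [|split; auto].
           rcA. rewrite <- Hc2, <- Ec, Hc1. rewrite <- !mmul_assoc. f_equal. f_equal. symmetry; apply cmc; auto.
        -- destruct (F2 o1 nI1 nd1) as [[g1' Hg1] [Hc1 Hf1]].
           assert (Hx : cm E I a x) by (rewrite <- Ef in Hf1; apply cm_mul in Hf1; tauto).
           destruct (lL (og E I lt o2) y g1') as [[y' Hy]|[g2' [_ Hy]]].
           { rewrite Eg; auto. }
           ++ eapply Rh_cp. apply rIII; eauto. apply rII; eauto. exists x, y'. split; [|split; auto].
              { rcA. rewrite <- Hc2, <- Ec, Hy. rewrite <- !mmul_assoc. f_equal.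
                rewrite <- (cmc _ Hx), mmul_assoc, <- (cmc _ Hc1), <- mmul_assoc. auto. }
              { rcA. rewrite <- Hg1, <- Eg, Hy, mmul_assoc. auto. }
           ++ exfalso. apply cm0 in Hy. apply cm0 in Hx. apply cm0 in Hc1.
              assert (cnt E I a (oc E I lt o2) > 0) by (rewrite Hc2, cnt_mul, cntA; lia).
              rewrite <- Ec, !cnt_mul in H. lia.
    +
      destruct (F2 o2 nI2 nd2) as [[g2' Hg2] [Hc2 _]].
      assert (Hy : cm E I a y) by (rewrite <- Ec in Hc2; apply cm_mul in Hc2; destruct Hc2 as [Hc2 _]; apply cm_mul in Hc2; tauto).
      assert (Hx : cm E I a x) by (rewrite <- Ec in Hc2; apply cm_mul in Hc2; tauto).
      destruct (classic (caseI o1)) as [[f1' Hf1]|nI1].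
      * exfalso. destruct (lL x (of E I lt o2) f1') as [[v' Hv]|[x' [Hx' _]]].
        { rewrite Ef; auto. }
        { apply nI2; exists v'; auto. }
        apply cm0 in Hx. rewrite Hx', cnt_mul, cntA in Hx. lia.
      * destruct (classic (divc o1)) as [[c1' Hc1]|nd1].
        -- exfalso. apply cm0 in Hc2. rewrite <- Ec, Hc1, !cnt_mul, cntA in Hc2. lia.
        -- destruct (F2 o1 nI1 nd1) as [[g1' Hg1] _].
           eapply Rh_cp. apply rIII; eauto. apply rIII; eauto. exists x, y. split; [auto|split; auto].
           rcA. rewrite <- Hg1, <- Eg, Hg2. rewrite <- !mmul_assoc. f_equal. symmetry; apply cmc; auto.
Qed.


Lemma cp_refl dd (o : ob (Cm E I lt dd)) : cp E I lt o (oc E I lt o) (of E I lt o) (og E I lt o).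
Proof. split; auto. Qed.

Lemma Rh_refl dd (o : ob (Cm E I lt dd)) : Rh (Cm E I lt dd) o o.
Proof. constructor. apply cid. Qed.

Lemma III_down (o1 o2 : ob C) x y :
  mmul (mmul y (oc E I lt o1)) x = oc E I lt o2 -> mmul x (of E I lt o2) = of E I lt o1 ->
  ~ caseI o2 -> ~ divc o2 -> ~ caseI o1 /\ ~ divc o1.
Proof.
  intros Ec Ef nI2 nd2. destruct (F2 o2 nI2 nd2) as [_ [Hc2 _]].
  assert (Hx : cm E I a x) by (rewrite <- Ec in Hc2; apply cm_mul in Hc2; tauto).
  split.
  - intros [f1' Hf1]. destruct (lL x (of E I lt o2) f1') as [[v' Hv]|[x' [Hx' _]]].
    { rewrite Ef; auto. }
    { apply nI2; exists v'; auto. }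
    apply cm0 in Hx. rewrite Hx', cnt_mul, cntA in Hx. lia.
  - intros [c1' Hc1]. apply cm0 in Hc2. rewrite <- Ec, Hc1, !cnt_mul, cntA in Hc2. lia.
Qed.

Lemma mono_K : mono C C K.
Proof.
  intros o1 o2 H. pose proof H as H0. apply Rh_iff in H. destruct H as [x [y [Ec [Ef Eg]]]].
  destruct (classic (caseI o2 \/ divc o2)) as [h2|h2].
  - rewrite (K_id o2 h2). destruct (classic (caseI o1 \/ divc o1)) as [h1|h1].
    + rewrite (K_id o1 h1). auto.
    + assert (nI1 : ~ caseI o1) by tauto. assert (nd1 : ~ divc o1) by tauto.
      destruct (F2 o1 nI1 nd1) as [[g1' Hg1] [Hc1 Hf1]].
      assert (Hx : cm E I a x) by (rewrite <- Ef in Hf1; apply cm_mul in Hf1; tauto).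
      assert (nI2 : ~ caseI o2).
      { intros [f2' Hf2]. apply nI1. exists (mmul x f2'). rewrite <- Ef, Hf2, mmul_assoc. auto. }
      assert (Hd2 : divc o2) by tauto. destruct Hd2 as [c2' Hc2].
      destruct (lL (og E I lt o2) y g1') as [[y' Hy]|[g2' [_ Hy]]].
      { rewrite Eg; auto. }
      * eapply Rh_cp. apply KIII; eauto. apply cp_refl. exists x, y'. split; [|split; auto].
        { rewrite <- Ec, Hy. rewrite !mmul_assoc. auto. }
        { rcA. rewrite <- Hg1, <- Eg, Hy, mmul_assoc. auto. }
      * exfalso. apply cm0 in Hy. apply cm0 in Hx. apply cm0 in Hc1.
        assert (cnt E I a (oc E I lt o2) > 0) by (rewrite Hc2, cnt_mul, cntA; lia).
        rewrite <- Ec, !cnt_mul in H. lia.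
  - assert (nI2 : ~ caseI o2) by tauto. assert (nd2 : ~ divc o2) by tauto.
    destruct (III_down o1 o2 x y Ec Ef nI2 nd2) as [nI1 nd1].
    destruct (F2 o2 nI2 nd2) as [[g2' Hg2] [Hc2 _]].
    destruct (F2 o1 nI1 nd1) as [[g1' Hg1] _].
    assert (Hy : cm E I a y) by (rewrite <- Ec in Hc2; apply cm_mul in Hc2; destruct Hc2 as [Hc2 _]; apply cm_mul in Hc2; tauto).
    eapply Rh_cp. apply KIII; eauto. apply KIII; eauto. exists x, y. split; [|split; auto].
    + rewrite <- Ec. rewrite (mmul_assoc y A), <- (cmc _ Hy). rewrite !mmul_assoc. auto.
    + rcA. rewrite <- Hg1, <- Eg, Hg2. rewrite <- !mmul_assoc. f_equal. symmetry; apply cmc; auto.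
Qed.

Lemma K_ge o : Rh C o (K o).
Proof.
  destruct (classic (caseI o \/ divc o)) as [h|h].
  - rewrite (K_id o h). apply Rh_refl.
  - assert (nI : ~ caseI o) by tauto. assert (nd : ~ divc o) by tauto.
    destruct (F2 o nI nd) as [[g' Hg] _].
    eapply Rh_cp. apply cp_refl. apply KIII; eauto. exists (mone I), A. split; [|split].
    + rewrite mmul_1r. auto.
    + rewrite mmul_1l. auto.
    + auto.
Qed.

Lemma iota_r_le o : Rh C (iota (r o)) (K o).
Proof.
  destruct (classic (caseI o)) as [[f' Hf]|nI].
  - rewrite (K_id o (or_introl (ex_intro _ f' Hf))).
    destruct (rI o f' Hf) as [E1 [E2 E3]].
    eapply Rh_cp. apply iota_spec. apply cp_refl. exists (mone I), (mone I).
    rewrite E1, E2, E3, Hf, !mmul_1l, !mmul_1r. auto.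
  - destruct (F1 o nI) as [_ Hf].
    destruct (classic (divc o)) as [[c' Hc]|nd].
    + rewrite (K_id o (or_intror (ex_intro _ c' Hc))).
      destruct (rII o c' nI Hc) as [E1 [E2 E3]].
      eapply Rh_cp. apply iota_spec. apply cp_refl. exists A, (mone I).
      rewrite E1, E2, E3, Hc, !mmul_1l, !mmul_1r. split; auto. split; auto. apply cmc; auto.
    + destruct (F2 o nI nd) as [[g' Hg] [Hc _]].
      destruct (rIII o g' nI nd Hg) as [E1 [E2 E3]].
      eapply Rh_cp. apply iota_spec. apply KIII; eauto. exists A, (mone I).
      rewrite E1, E2, E3, !mmul_1l, !mmul_1r. split. symmetry; apply cmc; auto. split; auto. apply cmc; auto.
Qed.

Lemma mono_iota : mono D C iota.
Proof.
  intros o1 o2 H. apply Rh_iff in H. destruct H as [x [y [Ec [Ef Eg]]]].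
  eapply Rh_cp. apply iota_spec. apply iota_spec. exists x, y. split; auto. split; auto.
  rewrite mmul_assoc, Ef. auto.
Qed.

Lemma step_P : connected D /\ colim_pos_vanish D -> connected C /\ colim_pos_vanish C.
Proof.
  intros [H1 H2]. split.
  - apply (conn_step C D r iota K mono_iota K_ge iota_r_le H1).
  - apply (acyc_step C D (Cm_thin E I lt I_irrefl I_sym d) (Cm_thin E I lt I_irrefl I_sym d')
      (defobj E I lt I_sym lt_irrefl lt_trans lt_total d) (defobj E I lt I_sym lt_irrefl lt_trans lt_total d')
      r iota K mono_r mono_iota mono_K K_ge iota_r_le H2).
Qed.

End Step.

Require Import Defs.

Theorem mainTheorem18 (E : Type) (I : E -> E -> Prop) (lt : E -> E -> Prop)
  (I_irrefl : forall a, ~ I a a) (I_sym : forall a b, I a b -> I b a)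
  (lt_irrefl : forall a, ~ lt a a)
  (lt_trans : forall a b c, lt a b -> lt b c -> lt a c)
  (lt_total : forall a b, lt a b \/ a = b \/ lt b a) :
  strong_coinitial (incl (FM I) (@union_T E I lt)).
Proof.
  intro d. change (connected (Cm E I lt d) /\ colim_pos_vanish (Cm E I lt d)). revert d.
  apply (trace_ind E I).
  - apply base_case. apply Cm_thin; auto. apply defobj; auto.
    intros o1 o2. pose proof (o_eq E I lt _ o1) as H1. pose proof (o_eq E I lt _ o2) as H2.
    apply mul_eq_one in H1. destruct H1 as [H1 H1f]. apply mul_eq_one in H1. destruct H1 as [H1g H1c].
    apply mul_eq_one in H2. destruct H2 as [H2 H2f]. apply mul_eq_one in H2. destruct H2 as [H2g H2c].
    apply obj_ext; congruence.
  - intros x a IH. apply step_P; auto.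
Qed.
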